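(* Consider the equation $q_{1,1}+q_{0,1}q_{0,2}=0$ for $q=q(z_1,z_2)$, where $q_{k,l}:=\partial^{k+l}q/\partial z_1^k\partial z_2^l$. A differential function $\breve\alpha$ depending only on $z_1,z_2$ and the parametric derivatives $q_{k,l}$ ($k\in\mathbb N_0$, $l\in\{0,1\}$) satisfies $\hat{\mathrm D}_2\breve\alpha=0$ (i.e., is a $z_2$-integral of the equation) if and only if it is a sufficiently smooth function of $z_1$, $I^1:=q_{1,0}+\frac12(q_{0,1})^2$ and finitely many total derivatives of $I^1$ with respect to $z_1$: \[ \breve\alpha=\breve\alpha(z_1,I^1,\mathrm D_1I^1,\dots,\mathrm D_1^rI^1)\quad\text{for some } r\in\mathbb N. \]
   Context: $\mathrm D_1,\mathrm D_2$ are total derivatives with respect to $z_1,z_2$. The equation is solved for $q_{0,2}$; derivatives $q_{k,l}$ with $l\ge2$ are principal and those with $l\le1$ parametric. $\hat{\mathrm D}_2$ is the restriction of $\mathrm D_2$ to the solution manifold, acting on functions of $z_1,z_2$ and parametric derivatives with principal derivatives eliminated via the equation and its differential consequences. *)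

(* Defs.v *)
From Stdlib Require Import Reals.
From Coquelicot Require Import Coquelicot.
Open Scope R_scope.

Definition upd {T : Type} (eqd : forall a b : T, {a = b} + {a <> b})
  (x : T -> R) (c : T) (t : R) : T -> R :=
  fun d => if eqd d c then t else x d.

Definition pd {T : Type} (eqd : forall a b : T, {a = b} + {a <> b})
  (c : T) (f : (T -> R) -> R) : (T -> R) -> R :=
  fun x => Derive (fun t => f (upd eqd x c t)) (x c).

Definition order_le {T : Type} (ord : T -> nat) (N : nat) (f : (T -> R) -> R) : Prop :=
  forall x y, (forall c, (ord c <= N)%nat -> x c = y c) -> f x = f y.

Definition near_ord {T : Type} (ord : T -> nat) (M : nat) (d : R) (x y : T -> R) : Prop :=
  forall c, (ord c <= M)%nat -> Rabs (y c - x c) < d.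

(* continuity on D (product topology) *)
Definition cont_on {T : Type} (ord : T -> nat) (D : (T -> R) -> Prop) (f : (T -> R) -> R) : Prop :=
  forall x, D x -> forall eps, 0 < eps ->
    exists (M : nat) (d : R), 0 < d /\
      forall y, D y -> near_ord ord M d x y -> Rabs (f y - f x) < eps.

Fixpoint Ck_on {T : Type} (eqd : forall a b : T, {a = b} + {a <> b}) (ord : T -> nat)
  (D : (T -> R) -> Prop) (k : nat) (f : (T -> R) -> R) : Prop :=
  match k with
  | O => cont_on ord D f
  | S k' => cont_on ord D f /\
      forall c, (forall x, D x -> ex_derive (fun t => f (upd eqd x c t)) (x c)) /\
                Ck_on eqd ord D k' (pd eqd c f)
  end.

Definition smooth_on {T : Type} (eqd : forall a b : T, {a = b} + {a <> b}) (ord : T -> nat)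
  (D : (T -> R) -> Prop) (f : (T -> R) -> R) : Prop :=
  forall k, Ck_on eqd ord D k f.

(* ---------- Jet coordinates: z1, z2, q_{k,0}, q_{k,1} (parametric) ---------- *)

Inductive coord : Type := Z1 | Z2 | Q0 (k : nat) | Q1 (k : nat).

Definition coord_eq_dec : forall a b : coord, {a = b} + {a <> b}.
Proof. decide equality; apply PeanoNat.Nat.eq_dec. Defined.

Definition cord (c : coord) : nat :=
  match c with Z1 | Z2 => O | Q0 k => k | Q1 k => k end.

Definition jet := coord -> R.

Definition pdJ := pd coord_eq_dec.

(* domain where the equation can be solved for q_{0,2}: q_{0,1} <> 0 *)
Definition Jdom (p : jet) : Prop := p (Q1 0) <> 0.

(* total derivative D_1 on functions of order <= N of parametric coordinates *)
Definition Dh1 (N : nat) (a : jet -> R) : jet -> R :=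
  fun p => pdJ Z1 a p +
    sum_f_R0 (fun k => p (Q0 (S k)) * pdJ (Q0 k) a p + p (Q1 (S k)) * pdJ (Q1 k) a p) N.

(* q_{0,2} from the equation q_{1,1} + q_{0,1} q_{0,2} = 0 *)
Definition q02 (p : jet) : R := - p (Q1 1) / p (Q1 0).

(* q_{k,2} = D_1^k q_{0,2}, expressed in parametric derivatives (order k+1) *)
Fixpoint q2 (k : nat) : jet -> R :=
  match k with
  | O => q02
  | S j => Dh1 (S j) (q2 j)
  end.

(* restricted total derivative \hat D_2 on functions of order <= N *)
Definition Dh2 (N : nat) (a : jet -> R) : jet -> R :=
  fun p => pdJ Z2 a p +
    sum_f_R0 (fun k => p (Q1 k) * pdJ (Q0 k) a p + q2 k p * pdJ (Q1 k) a p) N.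

Definition I1 (p : jet) : R := p (Q0 1) + (p (Q1 0)) ^ 2 / 2.

Fixpoint DI (j : nat) : jet -> R :=
  match j with
  | O => I1
  | S j' => Dh1 (S j') (DI j')
  end.

Definition args (p : jet) : nat -> R :=
  fun i => match i with O => p Z1 | S j => DI j p end.

(* Main.v *)
Require Import Defs.
From Stdlib Require Import Reals.
From Coquelicot Require Import Coquelicot.
From Stdlib Require Import Lra Lia List FunctionalExtensionality.
From Stdlib Require FinFun.
Open Scope R_scope.

Section Gen.
Context {T : Type} (eqd : forall a b : T, {a = b} + {a <> b}) (ord : T -> nat).

Lemma upd_same x c t : upd eqd x c t c = t.
Proof. unfold upd. destruct (eqd c c); congruence. Qed.

Lemma upd_other x c d t : d <> c -> upd eqd x c t d = x d.
Proof. intros H. unfold upd. destruct (eqd d c); congruence. Qed.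

Lemma upd_upd x c s t : upd eqd (upd eqd x c s) c t = upd eqd x c t.
Proof. apply functional_extensionality; intro d. unfold upd. destruct (eqd d c); auto. Qed.

Lemma upd_id x c : upd eqd x c (x c) = x.
Proof. apply functional_extensionality; intro d. unfold upd. destruct (eqd d c); subst; auto. Qed.

Lemma line_deriv g y c s :
  ex_derive (fun t => g (upd eqd (upd eqd y c s) c t)) (upd eqd y c s c) ->
  is_derive (fun t => g (upd eqd y c t)) s (pd eqd c g (upd eqd y c s)).
Proof.
  intros H. unfold pd. rewrite upd_same in *.
  assert (H' : ex_derive (fun t => g (upd eqd y c t)) s).
  { eapply ex_derive_ext; [|exact H]. intro t; simpl; rewrite upd_upd; auto. }
  replace (Derive (fun t => g (upd eqd (upd eqd y c s) c t)) s)
    with (Derive (fun t => g (upd eqd y c t)) s).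
  2:{ apply Derive_ext. intro; rewrite upd_upd; auto. }
  apply Derive_correct; auto.
Qed.

Lemma deriv_cont f x l : is_derive f x l ->
  forall eps, 0 < eps -> exists d, 0 < d /\ forall y, Rabs (y - x) < d -> Rabs (f y - f x) < eps.
Proof.
  intros H eps Heps. apply is_derive_Reals in H.
  destruct (H 1 Rlt_0_1) as [dl Hdl].
  exists (Rmin dl (eps / (Rabs l + 1))). split.
  { apply Rmin_pos. apply cond_pos. apply Rdiv_lt_0_compat; auto. pose proof (Rabs_pos l); lra. }
  intros y Hy. destruct (Req_dec y x) as [->|Hne].
  { replace (f x - f x) with 0 by ring. rewrite Rabs_R0; auto. }
  pose proof (Rmin_l dl (eps / (Rabs l + 1))). pose proof (Rmin_r dl (eps / (Rabs l + 1))).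
  assert (Hh : y - x <> 0) by lra.
  specialize (Hdl (y - x) Hh ltac:(lra)). replace (x + (y - x)) with y in Hdl by ring.
  set (q := (f y - f x) / (y - x)) in *.
  assert (E : f y - f x = q * (y - x)) by (unfold q; field; auto).
  rewrite E, Rabs_mult.
  assert (Rabs q < Rabs l + 1).
  { replace q with ((q - l) + l) by ring. eapply Rle_lt_trans. apply Rabs_triang. lra. }
  assert (0 < Rabs l + 1) by (pose proof (Rabs_pos l); lra).
  apply Rle_lt_trans with ((Rabs l + 1) * Rabs (y - x)).
  { apply Rmult_le_compat_r. apply Rabs_pos. lra. }
  apply Rlt_le_trans with ((Rabs l + 1) * (eps / (Rabs l + 1))).
  { apply Rmult_lt_compat_l; lra. }
  right. field. lra.
Qed.

Lemma exd_cont f x : ex_derive f x -> continuity_pt f x.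
Proof. intros H. apply derivable_continuous_pt. apply ex_derive_Reals_0. exact H. Qed.

Lemma const_line g y c a b :
  (forall s, Rmin a b <= s <= Rmax a b ->
      ex_derive (fun t => g (upd eqd y c t)) s /\ Derive (fun t => g (upd eqd y c t)) s = 0) ->
  g (upd eqd y c a) = g (upd eqd y c b).
Proof.
  intros H.
  destruct (MVT_gen (fun t => g (upd eqd y c t)) a b (fun _ => 0)) as [z [_ Hz]].
  - intros x Hx. destruct (H x ltac:(lra)) as [H1 H2]. rewrite <- H2. apply Derive_correct; auto.
  - intros x Hx. apply exd_cont. apply H; auto.
  - simpl in Hz. lra.
Qed.

Fixpoint lsum (l : list T) (g : T -> R) : R :=
  match l with nil => 0 | c :: l' => g c + lsum l' g end.

Fixpoint Pl (y0 : T -> R) (f : T -> R -> R) (cs : list T) (t : R) : T -> R :=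
  match cs with
  | nil => y0
  | c :: cs' => upd eqd (Pl y0 f cs' t) c (f c t)
  end.

Lemma Pl_notin y0 f cs t c : ~ In c cs -> Pl y0 f cs t c = y0 c.
Proof.
  induction cs; simpl; auto. intros H. rewrite upd_other; auto.
Qed.

Lemma Pl_in y0 f cs t c : In c cs -> Pl y0 f cs t c = f c t.
Proof.
  induction cs; simpl; [tauto|]. intros [->|H].
  - apply upd_same.
  - destruct (eqd c a) as [->|Hne]. apply upd_same. rewrite upd_other; auto.
Qed.

Lemma Pl_t0 y0 f cs t0 : (forall c, In c cs -> f c t0 = y0 c) -> Pl y0 f cs t0 = y0.
Proof.
  intros H. apply functional_extensionality. intros c.
  destruct (in_dec eqd c cs). rewrite Pl_in; auto. apply Pl_notin; auto.
Qed.

Lemma Pl_near y0 f f' cs t0 :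
  (forall c, In c cs -> f c t0 = y0 c) ->
  (forall c, In c cs -> is_derive (f c) t0 (f' c)) ->
  forall dl, 0 < dl -> exists eta, 0 < eta /\ forall t, Rabs (t - t0) < eta ->
     forall c, Rabs (Pl y0 f cs t c - y0 c) < dl.
Proof.
  intros H0 Hd dl Hdl. induction cs as [|a cs IH].
  - exists 1. split; [lra|]. intros t _ c. simpl. replace (y0 c - y0 c) with 0 by ring.
    rewrite Rabs_R0; auto.
  - destruct IH as [e1 [He1 IH]].
    { intros; apply H0; simpl; auto. }
    { intros; apply Hd; simpl; auto. }
    destruct (deriv_cont _ _ _ (Hd a (or_introl eq_refl)) dl Hdl) as [e2 [He2 Hc]].
    exists (Rmin e1 e2). split. apply Rmin_pos; auto.
    intros t Ht c. simpl. pose proof (Rmin_l e1 e2). pose proof (Rmin_r e1 e2).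
    destruct (eqd c a) as [->|Hne].
    + rewrite upd_same. rewrite <- (H0 a (or_introl eq_refl)). apply Hc. lra.
    + rewrite upd_other; auto. apply IH. lra.
Qed.

Lemma near_ord_refl M d x : 0 < d -> near_ord ord M d x x.
Proof. intros Hd c _. replace (x c - x c) with 0 by ring. rewrite Rabs_R0; auto. Qed.

Lemma chain_Pl (g : (T -> R) -> R) (M0 : nat) (d0 : R) (D : (T -> R) -> Prop) y0 f f' cs t0 :
  0 < d0 -> (forall y, near_ord ord M0 d0 y0 y -> D y) ->
  (forall c y, D y -> ex_derive (fun t => g (upd eqd y c t)) (y c)) ->
  (forall c, In c cs -> cont_on ord D (pd eqd c g)) ->
  NoDup cs ->
  (forall c, In c cs -> f c t0 = y0 c) ->
  (forall c, In c cs -> is_derive (f c) t0 (f' c)) ->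
  is_derive (fun t => g (Pl y0 f cs t)) t0 (lsum cs (fun c => pd eqd c g y0 * f' c)).
Proof.
  intros Hd0 HD Hex Hcont Hnd Hf0 Hfd.
  assert (Dy0 : D y0) by (apply HD; apply near_ord_refl; auto).
  induction cs as [|c cs IH].
  - simpl. apply (is_derive_const (g y0) t0).
  - inversion Hnd as [|? ? Hnin Hnd']; subst.
    assert (IH' := IH (fun c' H => Hcont c' (or_intror H)) Hnd'
                     (fun c' H => Hf0 c' (or_intror H)) (fun c' H => Hfd c' (or_intror H))).
    simpl.
    set (A := pd eqd c g y0). set (B := f' c).
    set (h := fun t => g (upd eqd (Pl y0 f cs t) c (f c t)) - g (Pl y0 f cs t)).
    assert (Hh : is_derive h t0 (A * B)).
    { apply is_derive_Reals. intros eps Heps.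
      assert (HfB : derivable_pt_lim (f c) t0 B).
      { apply is_derive_Reals. apply Hfd. simpl; auto. }
      assert (HA1 : 0 < Rabs A + 1) by (pose proof (Rabs_pos A); lra).
      assert (HB1 : 0 < Rabs B + 1) by (pose proof (Rabs_pos B); lra).
      set (eps1 := Rmin 1 (eps / (2 * (Rabs A + 1)))).
      assert (He1 : 0 < eps1).
      { apply Rmin_pos. lra. apply Rdiv_lt_0_compat; lra. }
      destruct (HfB eps1 He1) as [dl1 Hdl1].
      set (eps2 := eps / (2 * (Rabs B + 1))).
      assert (He2 : 0 < eps2) by (apply Rdiv_lt_0_compat; lra).
      destruct (Hcont c (or_introl eq_refl) y0 Dy0 eps2 He2) as [M2 [d2 [Hd2 Hc2]]].
      set (dl := Rmin d0 d2).
      assert (Hdl : 0 < dl) by (apply Rmin_pos; auto).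
      destruct (Pl_near y0 f f' cs t0 (fun c' H => Hf0 c' (or_intror H))
                  (fun c' H => Hfd c' (or_intror H)) dl Hdl) as [eta [Heta Hnear]].
      destruct (deriv_cont _ _ _ (Hfd c (or_introl eq_refl)) dl Hdl) as [eta3 [Heta3 Hc3]].
      assert (Hdel : 0 < Rmin dl1 (Rmin eta eta3)).
      { apply Rmin_pos. apply cond_pos. apply Rmin_pos; auto. }
      exists (mkposreal _ Hdel). simpl. intros hh Hhh Hhabs.
      pose proof (Rmin_l dl1 (Rmin eta eta3)). pose proof (Rmin_r dl1 (Rmin eta eta3)).
      pose proof (Rmin_l eta eta3). pose proof (Rmin_r eta eta3).
      pose proof (Rmin_l d0 d2). pose proof (Rmin_r d0 d2).
      set (t := t0 + hh).
      assert (Hh0 : h t0 = 0).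
      { unfold h. rewrite Pl_t0 by (intros; apply Hf0; simpl; auto).
        rewrite (Hf0 c (or_introl eq_refl)), upd_id. ring. }
      rewrite Hh0.
      set (z := Pl y0 f cs t).
      assert (Hzc : z c = y0 c) by (apply Pl_notin; auto).
      assert (Hzn : forall d, Rabs (z d - y0 d) < dl).
      { intros d. apply Hnear. unfold t. replace (t0 + hh - t0) with hh by ring. lra. }
      assert (Hfct : Rabs (f c t - y0 c) < dl).
      { rewrite <- (Hf0 c (or_introl eq_refl)). apply Hc3. unfold t.
        replace (t0 + hh - t0) with hh by ring. lra. }
      assert (Hw : forall s, Rmin (y0 c) (f c t) <= s <= Rmax (y0 c) (f c t) ->
                 forall M, near_ord ord M dl y0 (upd eqd z c s)).
      { intros s Hs M d _. destruct (eqd d c) as [->|Hne].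
        - rewrite upd_same.
          destruct (Rle_dec (y0 c) (f c t)).
          + rewrite Rmin_left, Rmax_right in Hs by lra.
            rewrite Rabs_right by lra. rewrite Rabs_right in Hfct by lra. lra.
          + rewrite Rmin_right, Rmax_left in Hs by lra.
            rewrite Rabs_left1 by lra. rewrite Rabs_left1 in Hfct by lra. lra.
        - rewrite upd_other; auto. }
      assert (HwD : forall s, Rmin (y0 c) (f c t) <= s <= Rmax (y0 c) (f c t) -> D (upd eqd z c s)).
      { intros s Hs. apply HD. intros d Hd. eapply Rlt_le_trans. apply (Hw s Hs M0); auto. auto. }
      destruct (MVT_gen (fun s => g (upd eqd z c s)) (y0 c) (f c t)
                  (fun s => pd eqd c g (upd eqd z c s))) as [xi [Hxi Hmvt]].
      { intros x Hx. apply line_deriv. exact (Hex c (upd eqd z c x) (HwD x ltac:(lra))). }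
      { intros x Hx. apply exd_cont. eexists. apply line_deriv.
        exact (Hex c (upd eqd z c x) (HwD x Hx)). }
      simpl in Hmvt.
      set (P := pd eqd c g (upd eqd z c xi)) in *.
      assert (HP : Rabs (P - A) < eps2).
      { apply Hc2. apply HwD; auto. intros d Hd. eapply Rlt_le_trans. apply (Hw xi Hxi M2); auto. auto. }
      assert (Eh : h t = P * (f c t - f c t0)).
      { unfold h. fold z.
        assert (Ez : g z = g (upd eqd z c (y0 c))) by (rewrite <- Hzc, upd_id; auto).
        rewrite Ez, Hmvt, (Hf0 c (or_introl eq_refl)). ring. }
      specialize (Hdl1 hh Hhh ltac:(lra)).
      set (q := (f c (t0 + hh) - f c t0) / hh) in *.
      replace ((h t - 0) / hh - A * B) with (P * q - A * B).
      2:{ rewrite Eh. unfold q, t. field. auto. }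
      replace (P * q - A * B) with ((P - A) * q + A * (q - B)) by ring.
      eapply Rle_lt_trans. apply Rabs_triang. rewrite (Rabs_mult (P - A)), (Rabs_mult A).
      assert (Hq : Rabs q <= Rabs B + 1).
      { replace q with ((q - B) + B) by ring. eapply Rle_trans. apply Rabs_triang.
        assert (eps1 <= 1) by (unfold eps1; apply Rmin_l). lra. }
      assert (Hq2 : Rabs (q - B) < eps / (2 * (Rabs A + 1))).
      { eapply Rlt_le_trans. apply Hdl1. unfold eps1; apply Rmin_r. }
      assert (T1 : Rabs (P - A) * Rabs q <= eps2 * (Rabs B + 1)).
      { apply Rmult_le_compat; auto using Rabs_pos. lra. }
      assert (T2 : Rabs A * Rabs (q - B) <= (Rabs A + 1) * (eps / (2 * (Rabs A + 1)))).
      { apply Rmult_le_compat; auto using Rabs_pos; lra. }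
      assert (E1 : eps2 * (Rabs B + 1) = eps / 2) by (unfold eps2; field; lra).
      assert (E2 : (Rabs A + 1) * (eps / (2 * (Rabs A + 1))) = eps / 2) by (field; lra).
      assert (T3 : Rabs (P - A) * Rabs q < eps2 * (Rabs B + 1) \/ Rabs A * Rabs (q - B) < (Rabs A + 1) * (eps / (2 * (Rabs A + 1)))).
      { right. destruct (Req_dec (Rabs A) 0) as [E|E].
        - rewrite E2, E, Rmult_0_l. lra.
        - apply Rlt_le_trans with (Rabs A * (eps / (2 * (Rabs A + 1)))).
          apply Rmult_lt_compat_l; auto. pose proof (Rabs_pos A); lra.
          apply Rmult_le_compat_r. left; apply Rdiv_lt_0_compat; lra. lra. }
      lra. }
    eapply is_derive_ext.
    2:{ apply (is_derive_plus h (fun t => g (Pl y0 f cs t)) t0 _ _ Hh IH'). }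
    intros t. simpl. unfold plus; simpl. unfold h. ring.
Qed.

Lemma chain_gen (g : (T -> R) -> R) (K M0 : nat) (d0 : R) (D : (T -> R) -> Prop)
  (gam : R -> T -> R) (gam' : T -> R) cs t0 :
  order_le ord K g ->
  0 < d0 -> (forall y, near_ord ord M0 d0 (gam t0) y -> D y) ->
  (forall c y, D y -> ex_derive (fun t => g (upd eqd y c t)) (y c)) ->
  (forall c, In c cs -> cont_on ord D (pd eqd c g)) ->
  NoDup cs -> (forall c, (ord c <= K)%nat -> In c cs) ->
  (forall c, In c cs -> is_derive (fun t => gam t c) t0 (gam' c)) ->
  is_derive (fun t => g (gam t)) t0 (lsum cs (fun c => pd eqd c g (gam t0) * gam' c)).
Proof.
  intros Hord Hd0 HD Hex Hcont Hnd Hcov Hgd.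
  eapply is_derive_ext.
  2:{ apply (chain_Pl g M0 d0 D (gam t0) (fun c t => gam t c) gam' cs t0); auto. }
  intros t. simpl. apply Hord. intros c Hc. rewrite Pl_in; auto.
Qed.

End Gen.

Lemma sum_tail0 (f : nat -> R) a m :
  (forall k, (a < k)%nat -> f k = 0) -> (a <= m)%nat -> sum_f_R0 f m = sum_f_R0 f a.
Proof.
  intros H Ham. induction m.
  - assert (a = 0)%nat by lia. subst. auto.
  - destruct (Nat.eq_dec a (S m)) as [->|Hne]; auto.
    simpl. rewrite IHm by lia. rewrite H by lia. ring.
Qed.

Lemma sum_delta (g : nat -> R) j n : (j <= n)%nat ->
  sum_f_R0 (fun k => (if Nat.eq_dec k j then 1 else 0) * g k) n = g j.
Proof.
  intros Hj. induction n.
  - assert (j = 0)%nat by lia. subst. simpl. ring.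
  - rewrite tech5. destruct (Nat.eq_dec j (S n)) as [->|Hne].
    + rewrite (sum_eq _ (fun _ => 0)).
      * rewrite sum_cte. destruct (Nat.eq_dec (S n) (S n)); [|congruence]. ring.
      * intros i Hi. destruct (Nat.eq_dec i (S n)); [lia|ring].
    + rewrite IHn by lia. destruct (Nat.eq_dec (S n) j); [lia|ring].
Qed.

Lemma sum_swap (a : nat -> nat -> R) n m :
  sum_f_R0 (fun i => sum_f_R0 (fun k => a i k) m) n =
  sum_f_R0 (fun k => sum_f_R0 (fun i => a i k) n) m.
Proof.
  induction n.
  - simpl. auto.
  - simpl. rewrite IHn. rewrite <- sum_plus. auto.
Qed.

Lemma sum_scal_l (f : nat -> R) x n : x * sum_f_R0 f n = sum_f_R0 (fun i => x * f i) n.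
Proof. rewrite scal_sum. apply sum_eq. intros; ring. Qed.

Lemma sum_ext (f g : nat -> R) n : (forall i, (i <= n)%nat -> f i = g i) -> sum_f_R0 f n = sum_f_R0 g n.
Proof. apply sum_eq. Qed.

Lemma isd_id x : is_derive (fun t : R => t) x 1.
Proof. apply is_derive_Reals. apply derivable_pt_lim_id. Qed.

Lemma is_derive_val (f : R -> R) (x l l' : R) : is_derive f x l -> l = l' -> is_derive f x l'.
Proof. intros H ->; auto. Qed.

Lemma isd_const (a x : R) : is_derive (fun _ : R => a) x 0.
Proof. apply is_derive_Reals. apply derivable_pt_lim_const. Qed.

Notation updJ := (upd coord_eq_dec).

Lemma Jdom_open y0 y : Jdom y0 -> near_ord cord 0 (Rabs (y0 (Q1 0))) y0 y -> Jdom y.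
Proof.
  unfold Jdom. intros H0 Hn E. specialize (Hn (Q1 0) (le_n 0)). rewrite E in Hn.
  replace (0 - y0 (Q1 0)) with (- y0 (Q1 0)) in Hn by ring. rewrite Rabs_Ropp in Hn. lra.
Qed.

Lemma Jdom_pos y0 : Jdom y0 -> 0 < Rabs (y0 (Q1 0)).
Proof. intros H. apply Rabs_pos_lt. auto. Qed.

Lemma Jdom_upd_near p c t : Jdom p -> Rabs (t - p c) < Rabs (p (Q1 0)) -> Jdom (updJ p c t).
Proof.
  intros H Ht. apply (Jdom_open p); auto. intros d _. unfold upd.
  destruct (coord_eq_dec d c) as [->|]; auto.
  replace (p d - p d) with 0 by ring. rewrite Rabs_R0. apply Jdom_pos; auto.
Qed.

Lemma Jdom_loc p c : Jdom p -> locally (p c) (fun t => Jdom (updJ p c t)).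
Proof.
  intros H. exists (mkposreal _ (Jdom_pos p H)). intros y Hy.
  apply Jdom_upd_near; auto.
Qed.

Definition enumN (N : nat) : list coord :=
  Z1 :: Z2 :: map Q0 (seq 0 (S N)) ++ map Q1 (seq 0 (S N)).

Lemma enumN_nodup N : NoDup (enumN N).
Proof.
  unfold enumN. constructor.
  - intros [H|H]; [discriminate|]. apply in_app_or in H.
    destruct H as [H|H]; apply in_map_iff in H; destruct H as [x [H _]]; discriminate.
  - constructor.
    + intros H. apply in_app_or in H.
      destruct H as [H|H]; apply in_map_iff in H; destruct H as [x [H _]]; discriminate.
    + apply NoDup_app.
      * apply FinFun.Injective_map_NoDup. intros a b H; injection H; auto. apply seq_NoDup.
      * apply FinFun.Injective_map_NoDup. intros a b H; injection H; auto. apply seq_NoDup.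
      * intros x H1 H2. apply in_map_iff in H1. apply in_map_iff in H2.
        destruct H1 as [a [<- _]]. destruct H2 as [b [H _]]. discriminate.
Qed.

Lemma enumN_cover N c : (cord c <= N)%nat -> In c (enumN N).
Proof.
  intros H. unfold enumN. destruct c; simpl in H.
  - left; auto.
  - right; left; auto.
  - right; right. apply in_or_app. left. apply in_map. apply in_seq. lia.
  - right; right. apply in_or_app. right. apply in_map. apply in_seq. lia.
Qed.

Lemma lsum_app {T} (l1 l2 : list T) g : lsum (l1 ++ l2) g = lsum l1 g + lsum l2 g.
Proof. induction l1; simpl; [ring|]. rewrite IHl1. ring. Qed.

Lemma lsum_map_seq {T} (h : nat -> T) g n :
  lsum (map h (seq 0 (S n))) g = sum_f_R0 (fun k => g (h k)) n.
Proof.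
  induction n.
  - simpl. ring.
  - rewrite seq_S, map_app, lsum_app, IHn. simpl. ring.
Qed.

Lemma lsum_enumN N g :
  lsum (enumN N) g = g Z1 + g Z2 + sum_f_R0 (fun k => g (Q0 k)) N + sum_f_R0 (fun k => g (Q1 k)) N.
Proof.
  unfold enumN. cbn [lsum]. rewrite lsum_app, !lsum_map_seq. ring.
Qed.

Lemma lsum_seq g n : lsum (seq 0 (S n)) g = sum_f_R0 g n.
Proof. rewrite <- (map_id (seq 0 (S n))). apply lsum_map_seq. Qed.

Lemma lsum_ext {T} (l : list T) g h : (forall c, In c l -> g c = h c) -> lsum l g = lsum l h.
Proof. induction l; simpl; auto. intros H. rewrite H, IHl; auto. Qed.

Lemma lsum_scal {T} (l : list T) g x : x * lsum l g = lsum l (fun c => x * g c).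
Proof. induction l; simpl; [ring|]. rewrite <- IHl. ring. Qed.

Lemma lsum_plus {T} (l : list T) g h : lsum l (fun c => g c + h c) = lsum l g + lsum l h.
Proof. induction l; simpl; [ring|]. rewrite IHl. ring. Qed.

Lemma lsum_sum {T} (l : list T) (a : T -> nat -> R) n :
  lsum l (fun c => sum_f_R0 (a c) n) = sum_f_R0 (fun k => lsum l (fun c => a c k)) n.
Proof.
  induction l; simpl.
  - rewrite sum_cte. ring.
  - rewrite IHl. rewrite <- sum_plus. auto.
Qed.

Inductive ex : Type :=
 | EC (c : R) | EV (k : nat) | EI | EA (a b : ex) | EM (a b : ex).

Fixpoint ev (e : ex) (p : jet) : R :=
  match e with
  | EC c => c
  | EV k => p (Q1 k)
  | EI => / p (Q1 0)
  | EA a b => ev a p + ev b p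
  | EM a b => ev a p * ev b p
  end.

Fixpoint dv (k : nat) (e : ex) : ex :=
  match e with
  | EC _ => EC 0
  | EV j => if Nat.eq_dec j k then EC 1 else EC 0
  | EI => match k with O => EM (EC (-1)) (EM EI EI) | S _ => EC 0 end
  | EA a b => EA (dv k a) (dv k b)
  | EM a b => EA (EM (dv k a) b) (EM a (dv k b))
  end.

Fixpoint noI (e : ex) : Prop :=
  match e with
  | EI => False
  | EA a b | EM a b => noI a /\ noI b
  | _ => True
  end.

Fixpoint vb (n : nat) (e : ex) : Prop :=
  match e with
  | EV j => (j <= n)%nat
  | EA a b | EM a b => vb n a /\ vb n b
  | _ => True
  end.

Definition dvc (c : coord) (e : ex) (p : jet) : R :=
  match c with Q1 k => ev (dv k e) p | _ => 0 end.

Lemma ev_ext e p q : (forall k, p (Q1 k) = q (Q1 k)) -> ev e p = ev e q.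
Proof. intros H. induction e; simpl; try rewrite H; try rewrite IHe1, IHe2; auto. Qed.

Lemma noI_dv k e : noI e -> noI (dv k e).
Proof.
  induction e; simpl; intros; try tauto.
  destruct (Nat.eq_dec k0 k); simpl; auto.
Qed.

Lemma vb_dv n k e : vb n e -> vb n (dv k e).
Proof.
  induction e; simpl; intros; try tauto.
  - destruct (Nat.eq_dec k0 k); simpl; auto.
  - destruct k; simpl; auto.
Qed.

Lemma vb_mono n m e : (n <= m)%nat -> vb n e -> vb m e.
Proof. induction e; simpl; intuition lia. Qed.

Lemma vb_dv_zero n k e p : vb n e -> (n < k)%nat -> ev (dv k e) p = 0.
Proof.
  induction e; simpl; intros Hv Hk.
  - auto.
  - destruct (Nat.eq_dec k0 k); [lia|auto].
  - destruct k; [lia|auto].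
  - destruct Hv. rewrite IHe1, IHe2; auto. ring.
  - destruct Hv. rewrite IHe1, IHe2; auto. ring.
Qed.

Lemma vb_upd n k e p s : vb n e -> (n < k)%nat -> ev e (updJ p (Q1 k) s) = ev e p.
Proof.
  induction e; simpl; intros Hv Hk; auto.
  - rewrite upd_other; auto. intros H; injection H; lia.
  - rewrite upd_other; auto. intros H; injection H; lia.
  - destruct Hv. rewrite IHe1, IHe2; auto.
  - destruct Hv. rewrite IHe1, IHe2; auto.
Qed.

Lemma d2sym k i e p : ev (dv k (dv i e)) p = ev (dv i (dv k e)) p.
Proof.
  induction e; simpl.
  - auto.
  - destruct (Nat.eq_dec k0 i); destruct (Nat.eq_dec k0 k); simpl; auto.
  - destruct i; destruct k; simpl; ring.
  - rewrite IHe1, IHe2. auto.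
  - rewrite IHe1, IHe2. ring.
Qed.

Lemma ev_upd_nonQ1 e p c t : (forall k, c <> Q1 k) -> ev e (updJ p c t) = ev e p.
Proof.
  intros H. apply ev_ext. intros k. apply upd_other. auto.
Qed.

Definition okp (e : ex) (p : jet) : Prop := noI e \/ Jdom p.

Lemma ev_deriv_Q1 e p k : okp e p ->
  is_derive (fun t => ev e (updJ p (Q1 k) t)) (p (Q1 k)) (ev (dv k e) p).
Proof.
  induction e; simpl; intros Hok.
  - apply (isd_const c).
  - destruct (Nat.eq_dec k0 k) as [->|Hne]; simpl.
    + eapply is_derive_ext. 2: apply isd_id. intros t; simpl. rewrite upd_same. auto.
    + eapply is_derive_ext. 2: apply (isd_const (p (Q1 k0))).
      intros t; simpl. rewrite upd_other; auto. intros H; injection H; auto.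
  - destruct Hok as [[]|Hd]. destruct k as [|k]; simpl.
    + eapply is_derive_ext.
      2:{ eapply is_derive_val. apply (is_derive_inv (fun t => t) (p (Q1 0)) 1 (isd_id _) Hd).
          unfold Jdom in Hd. field. auto. }
      intros t; simpl. rewrite upd_same. auto.
    + eapply is_derive_ext. 2: apply (isd_const (/ p (Q1 0))).
      intros t; simpl. rewrite upd_other; auto. intros H; injection H; lia.
  - assert (okp e1 p /\ okp e2 p) as [H1 H2].
    { destruct Hok as [[]|]; unfold okp; tauto. }
    eapply is_derive_ext. 2: apply (is_derive_plus _ _ _ _ _ (IHe1 H1) (IHe2 H2)).
    intros; simpl; auto.
  - assert (okp e1 p /\ okp e2 p) as [H1 H2].
    { destruct Hok as [[]|]; unfold okp; tauto. }
    pose proof (is_derive_mult _ _ _ _ _ (IHe1 H1) (IHe2 H2) Rmult_comm) as Hm.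
    simpl in Hm. rewrite upd_id in Hm.
    eapply is_derive_ext. 2: exact Hm. intros; simpl; auto.
Qed.

Lemma ev_deriv e p c : okp e p ->
  is_derive (fun t => ev e (updJ p c t)) (p c) (dvc c e p).
Proof.
  intros Hok. destruct c; simpl;
  try (apply (is_derive_ext (fun _ => ev e p)); [|apply isd_const];
       intros t; symmetry; apply ev_upd_nonQ1; intros kk HH; discriminate).
  apply ev_deriv_Q1; auto.
Qed.

Lemma pdJ_ev e p c : okp e p -> pdJ c (ev e) p = dvc c e p.
Proof. intros H. unfold pdJ, pd. apply is_derive_unique. apply ev_deriv; auto. Qed.

Lemma dv_sem_eq a b k p :
  (forall q, Jdom q -> ev a q = ev b q) -> Jdom p -> ev (dv k a) p = ev (dv k b) p.
Proof.
  intros H Hp.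
  assert (Ha := ev_deriv_Q1 a p k (or_intror Hp)).
  assert (Hb := ev_deriv_Q1 b p k (or_intror Hp)).
  assert (Ha' : is_derive (fun t => ev b (updJ p (Q1 k) t)) (p (Q1 k)) (ev (dv k a) p)).
  { eapply is_derive_ext_loc; [|exact Ha].
    destruct (Jdom_loc p (Q1 k) Hp) as [eps He]. exists eps. intros y Hy. apply H. apply He; auto. }
  apply is_derive_unique in Ha'. apply is_derive_unique in Hb. congruence.
Qed.

Fixpoint Ssum (n : nat) (F : nat -> ex) : ex :=
  match n with O => F O | S m => EA (Ssum m F) (F (S m)) end.

Lemma ev_Ssum n F p : ev (Ssum n F) p = sum_f_R0 (fun i => ev (F i) p) n.
Proof. induction n; simpl; auto. rewrite IHn; auto. Qed.

Lemma dv_Ssum k n F p : ev (dv k (Ssum n F)) p = sum_f_R0 (fun i => ev (dv k (F i)) p) n.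
Proof. induction n; simpl; auto. rewrite IHn; auto. Qed.

Lemma vb_Ssum m n F : (forall i, (i <= n)%nat -> vb m (F i)) -> vb m (Ssum n F).
Proof. induction n; simpl; intros H; [auto| split; [apply IHn|apply H]; auto]. Qed.

Lemma noI_Ssum n F : (forall i, (i <= n)%nat -> noI (F i)) -> noI (Ssum n F).
Proof. induction n; simpl; intros H; [auto| split; [apply IHn|apply H]; auto]. Qed.

Definition Dsym (n : nat) (e : ex) : ex := Ssum n (fun k => EM (EV (S k)) (dv k e)).

Fixpoint H (j : nat) : ex :=
  match j with
  | O => EM (EC (/2)) (EM (EV 0) (EV 0))
  | S j' => Dsym j' (H j')
  end.

Fixpoint Q (j : nat) : ex :=
  match j with
  | O => EM (EC (-1)) (EM (EV 1) EI)
  | S j' => Dsym (S j') (Q j')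
  end.

Definition Esym (n : nat) (e : ex) : ex := Ssum n (fun k => EM (Q k) (dv k e)).

Lemma ev_Dsym n e p : ev (Dsym n e) p = sum_f_R0 (fun k => p (Q1 (S k)) * ev (dv k e) p) n.
Proof. unfold Dsym. rewrite ev_Ssum. auto. Qed.

Lemma ev_Esym n e p : ev (Esym n e) p = sum_f_R0 (fun k => ev (Q k) p * ev (dv k e) p) n.
Proof. unfold Esym. rewrite ev_Ssum. auto. Qed.

Lemma vb_Dsym n m e : vb n e -> (m <= n)%nat -> vb (S n) (Dsym m e).
Proof.
  intros Hv Hm. unfold Dsym. apply vb_Ssum. intros i Hi. simpl. split. lia.
  apply vb_dv. eapply vb_mono; [|exact Hv]. lia.
Qed.

Lemma vb_H j : vb j (H j).
Proof.
  induction j; [simpl; auto|].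
  apply vb_Dsym; auto.
Qed.

Lemma noI_H j : noI (H j).
Proof.
  induction j; [simpl; auto|].
  change (noI (Dsym j (H j))). unfold Dsym. apply noI_Ssum. intros i _. simpl. split; auto. apply noI_dv; auto.
Qed.

Lemma vb_Q j : vb (S j) (Q j).
Proof.
  induction j; [simpl; auto|].
  apply vb_Dsym; auto.
Qed.

Lemma Dsym_bound a e m1 m2 p : vb a e -> (a <= m1)%nat -> (a <= m2)%nat ->
  ev (Dsym m1 e) p = ev (Dsym m2 e) p.
Proof.
  intros Hv H1 H2. rewrite !ev_Dsym.
  rewrite (sum_tail0 _ a m1), (sum_tail0 _ a m2); auto;
  intros k Hk; rewrite (vb_dv_zero a); auto; ring.
Qed.


Definition ifQ0 (c : coord) (m : nat) : R :=
  match c with Q0 k => if Nat.eq_dec k m then 1 else 0 | _ => 0 end.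

Lemma coord_if_Q0 c m : (if coord_eq_dec c (Q0 m) then 1 else 0) = ifQ0 c m.
Proof.
  destruct (coord_eq_dec c (Q0 m)) as [->|Hne].
  - simpl. destruct (Nat.eq_dec m m); congruence.
  - destruct c; simpl; auto. destruct (Nat.eq_dec k m); subst; congruence.
Qed.

Lemma coord_deriv p c m : is_derive (fun t => updJ p c t (Q0 m)) (p c) (ifQ0 c m).
Proof.
  rewrite <- coord_if_Q0. destruct (coord_eq_dec c (Q0 m)) as [->|Hne].
  - eapply is_derive_ext. 2: apply isd_id. intros t; simpl. rewrite upd_same; auto.
  - apply (is_derive_ext (fun _ => p (Q0 m))). 2: apply isd_const.
    intros t; simpl. rewrite upd_other; auto.
Qed.

Lemma lin_deriv e p c m : okp e p ->
  is_derive (fun t => updJ p c t (Q0 m) + ev e (updJ p c t)) (p c) (ifQ0 c m + dvc c e p).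
Proof.
  intros Hok. apply (is_derive_plus _ _ _ _ _ (coord_deriv p c m) (ev_deriv e p c Hok)).
Qed.

Lemma pdJ_lin e p c m : okp e p ->
  pdJ c (fun q => q (Q0 m) + ev e q) p = ifQ0 c m + dvc c e p.
Proof. intros Hok. unfold pdJ, pd. apply is_derive_unique. apply lin_deriv; auto. Qed.

Lemma DI_eq j p : DI j p = p (Q0 (S j)) + ev (H j) p.
Proof.
  revert p. induction j; intros p.
  - simpl. unfold I1. field.
  - change (DI (S j) p) with (Dh1 (S j) (DI j) p).
    assert (E : DI j = fun q => q (Q0 (S j)) + ev (H j) q).
    { apply functional_extensionality; auto. }
    rewrite E. unfold Dh1.
    rewrite pdJ_lin by (left; apply noI_H).
    rewrite (sum_eq _ (fun k => (if Nat.eq_dec k (S j) then 1 else 0) * p (Q0 (S k))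
                               + p (Q1 (S k)) * ev (dv k (H j)) p)).
    2:{ intros k _. rewrite !pdJ_lin by (left; apply noI_H). simpl. ring. }
    rewrite sum_plus, sum_delta by lia.
    rewrite (sum_tail0 _ j (S j)) by (try lia; intros k Hk; rewrite (vb_dv_zero j) by (auto using vb_H); ring).
    change (ev (H (S j)) p) with (ev (Dsym j (H j)) p). rewrite ev_Dsym. simpl. ring.
Qed.

Lemma DI_fun j : DI j = fun q => q (Q0 (S j)) + ev (H j) q.
Proof. apply functional_extensionality. intro; apply DI_eq. Qed.

Lemma pdJ_loc f g p c : (forall q, Jdom q -> f q = g q) -> Jdom p -> pdJ c f p = pdJ c g p.
Proof.
  intros Hfg Hp. unfold pdJ, pd. apply Derive_ext_loc.
  destruct (Jdom_loc p c Hp) as [eps He]. exists eps. intros y Hy. apply Hfg. apply He; auto.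
Qed.

Lemma q2_eq j p : Jdom p -> q2 j p = ev (Q j) p.
Proof.
  revert p. induction j; intros p Hp.
  - simpl. unfold q02. unfold Rdiv. ring.
  - change (q2 (S j) p) with (Dh1 (S j) (q2 j) p). unfold Dh1.
    rewrite (pdJ_loc _ (ev (Q j))) by auto.
    rewrite pdJ_ev by (right; auto).
    rewrite (sum_eq _ (fun k => p (Q1 (S k)) * ev (dv k (Q j)) p)).
    2:{ intros k _. rewrite (pdJ_loc _ (ev (Q j)) p (Q0 k)), (pdJ_loc _ (ev (Q j)) p (Q1 k)) by auto.
        rewrite !pdJ_ev by (right; auto). simpl. ring. }
    change (Q (S j)) with (Dsym (S j) (Q j)). rewrite ev_Dsym. simpl. ring.
Qed.

Lemma sum_shift_delta (g : nat -> R) k m : (k <= S m)%nat ->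
  sum_f_R0 (fun i => (if Nat.eq_dec (S i) k then 1 else 0) * g i) m =
  match k with O => 0 | S k' => g k' end.
Proof.
  intros Hk. destruct k as [|k'].
  - rewrite (sum_eq _ (fun _ => 0)). rewrite sum_cte; ring.
    intros i _. destruct (Nat.eq_dec (S i) 0); [lia|ring].
  - rewrite <- (sum_delta g k' m) by lia. apply sum_eq. intros i _.
    destruct (Nat.eq_dec (S i) (S k')); destruct (Nat.eq_dec i k'); try lia; ring.
Qed.

Lemma ev_dv_EV k j p : ev (dv k (EV j)) p = if Nat.eq_dec j k then 1 else 0.
Proof. simpl. destruct (Nat.eq_dec j k); auto. Qed.

Lemma comm_ED a e n m p : vb a e -> (a < n)%nat -> (n < m)%nat -> Jdom p ->
  sum_f_R0 (fun k => ev (Q k) p * ev (dv k (Dsym m e)) p) n = ev (Dsym m (Esym n e)) p.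
Proof.
  intros Hv Han Hnm Hp.
  set (d := fun i => ev (dv i e) p).
  set (dd := fun k i => ev (dv k (dv i e)) p).
  rewrite (sum_eq _ (fun k => sum_f_R0 (fun i => ev (Q k) p * ((if Nat.eq_dec (S i) k then 1 else 0) * d i)) m
                         + sum_f_R0 (fun i => ev (Q k) p * p (Q1 (S i)) * dd k i) m)).
  2:{ intros k _. unfold Dsym. rewrite dv_Ssum. rewrite <- sum_plus. rewrite sum_scal_l.
      apply sum_eq. intros i _. change (ev (dv k (EM (EV (S i)) (dv i e))) p) with
        (ev (dv k (EV (S i))) p * ev (dv i e) p + p (Q1 (S i)) * ev (dv k (dv i e)) p).
      rewrite ev_dv_EV. unfold d, dd. ring. }
  rewrite sum_plus.
  rewrite ev_Dsym.
  rewrite (sum_eq (fun k0 => p (Q1 (S k0)) * ev (dv k0 (Esym n e)) p)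
             (fun i => sum_f_R0 (fun k => p (Q1 (S i)) * ev (dv i (Q k)) p * d k) n
                     + sum_f_R0 (fun k => ev (Q k) p * p (Q1 (S i)) * dd k i) n)).
  2:{ intros i _. unfold Esym. rewrite dv_Ssum. rewrite <- sum_plus. rewrite sum_scal_l.
      apply sum_eq. intros k _. simpl. unfold d, dd. rewrite (d2sym k i). ring. }
  rewrite sum_plus.
  rewrite (sum_swap (fun i k => ev (Q k) p * p (Q1 (S i)) * dd k i)).
  apply Rplus_eq_compat_r.
  rewrite (sum_swap (fun i k => p (Q1 (S i)) * ev (dv i (Q k)) p * d k)).
  rewrite (sum_eq (fun k => sum_f_R0 (fun i => ev (Q k) p * ((if Nat.eq_dec (S i) k then 1 else 0) * d i)) m)
                  (fun k => ev (Q k) p * match k with O => 0 | S k' => d k' end)).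
  2:{ intros k Hk. rewrite <- sum_scal_l. rewrite sum_shift_delta by lia. auto. }
  rewrite (sum_eq (fun k => sum_f_R0 (fun i => p (Q1 (S i)) * ev (dv i (Q k)) p * d k) m)
                  (fun k => ev (Q (S k)) p * d k)).
  2:{ intros k Hk. rewrite (sum_eq _ (fun i => d k * (p (Q1 (S i)) * ev (dv i (Q k)) p)))
        by (intros; ring).
      rewrite <- sum_scal_l. rewrite <- ev_Dsym.
      rewrite (Dsym_bound (S k) (Q k) m (S k)); auto using vb_Q; try lia.
      change (Dsym (S k) (Q k)) with (Q (S k)). ring. }
  destruct n as [|n']; [lia|].
  rewrite decomp_sum by lia. simpl pred. rewrite tech5.
  assert (Hdn : d (S n') = 0) by (unfold d; apply (vb_dv_zero a); auto).
  rewrite Hdn. ring_simplify. apply sum_eq. intros; ring.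
Qed.

Lemma EH j n p : (j <= n)%nat -> Jdom p ->
  sum_f_R0 (fun k => ev (Q k) p * ev (dv k (H j)) p) n = - p (Q1 (S j)).
Proof.
  revert n p. induction j; intros n p Hjn Hp.
  - rewrite (sum_tail0 _ 0 n); auto.
    + simpl. unfold Jdom in Hp. field. auto.
    + intros k Hk. rewrite (vb_dv_zero 0 k (H 0)); simpl; auto; ring.
  - rewrite (sum_eq _ (fun k => ev (Q k) p * ev (dv k (Dsym (S n) (H j))) p)).
    2:{ intros k _. f_equal. apply dv_sem_eq; auto. intros q _.
        change (H (S j)) with (Dsym j (H j)).
        apply (Dsym_bound j); auto using vb_H. lia. }
    rewrite (comm_ED j); auto using vb_H; try lia.
    rewrite ev_Dsym.
    rewrite (sum_eq _ (fun i => (if Nat.eq_dec i (S j) then 1 else 0) * (- p (Q1 (S i))))).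
    + rewrite sum_delta by lia. auto.
    + intros i _. rewrite (dv_sem_eq _ (EM (EC (-1)) (EV (S j)))); auto.
      * change (ev (dv i (EM (EC (-1)) (EV (S j)))) p) with
          (0 * p (Q1 (S j)) + (-1) * ev (dv i (EV (S j))) p). rewrite ev_dv_EV.
        destruct (Nat.eq_dec (S j) i); destruct (Nat.eq_dec i (S j)); subst; try lia; ring.
      * intros q Hq. rewrite ev_Esym. rewrite IHj by (auto; lia). simpl. ring.
Qed.

Lemma Dh2_DI j M p : (S j <= M)%nat -> Jdom p -> Dh2 M (DI j) p = 0.
Proof.
  intros HM Hp. rewrite DI_fun. unfold Dh2.
  rewrite pdJ_lin by (left; apply noI_H).
  rewrite (sum_eq _ (fun k => (if Nat.eq_dec k (S j) then 1 else 0) * p (Q1 k)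
                             + ev (Q k) p * ev (dv k (H j)) p)).
  2:{ intros k _. rewrite !pdJ_lin by (left; apply noI_H). rewrite q2_eq by auto. simpl. ring. }
  rewrite sum_plus, sum_delta by lia. rewrite EH by (auto; lia). simpl. ring.
Qed.


Lemma smooth_1 {T} (eqd : forall a b : T, {a = b} + {a <> b}) ord D f :
  smooth_on eqd ord D f ->
  cont_on ord D f /\ forall c, (forall x, D x -> ex_derive (fun t => f (upd eqd x c t)) (x c)) /\
                         cont_on ord D (pd eqd c f).
Proof. intros H. exact (H 1%nat). Qed.

Lemma pdJ_zero (a : jet -> R) N c p : order_le cord N a -> (N < cord c)%nat -> pdJ c a p = 0.
Proof.
  intros Ho Hc. unfold pdJ, pd. rewrite (Derive_ext _ (fun _ => a p)). apply Derive_const.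
  intros t. apply Ho. intros d Hd. rewrite upd_other; auto. intros ->; lia.
Qed.

Lemma Dh2_extend (a : jet -> R) N K p : order_le cord N a -> (N <= K)%nat -> Dh2 N a p = Dh2 K a p.
Proof.
  intros Ho HK. induction HK; auto. rewrite IHHK. unfold Dh2. rewrite tech5.
  rewrite (pdJ_zero a N (Q0 (S m))), (pdJ_zero a N (Q1 (S m))) by (auto; simpl; lia). ring.
Qed.

Definition Lop (K : nat) (p : jet) (w : coord -> R) : R :=
  w Z2 + sum_f_R0 (fun k => p (Q1 k) * w (Q0 k) + q2 k p * w (Q1 k)) K.

Lemma Dh2_Lop K a p : Dh2 K a p = Lop K p (fun c => pdJ c a p).
Proof. reflexivity. Qed.

Lemma Lop_lin K p (w : coord -> R) (P : nat -> R) (u : nat -> coord -> R) n :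
  (forall c, w c = sum_f_R0 (fun i => P i * u i c) n) ->
  Lop K p w = sum_f_R0 (fun i => P i * Lop K p (u i)) n.
Proof.
  intros Hw. unfold Lop.
  rewrite (sum_eq (fun i => P i * (u i Z2 + sum_f_R0 (fun k => p (Q1 k) * u i (Q0 k) + q2 k p * u i (Q1 k)) K))
                  (fun i => P i * u i Z2 + sum_f_R0 (fun k => P i * (p (Q1 k) * u i (Q0 k) + q2 k p * u i (Q1 k))) K)).
  2:{ intros i _. rewrite <- sum_scal_l. ring. }
  rewrite (sum_plus (fun i => P i * u i Z2)). rewrite Hw. f_equal.
  rewrite (sum_swap (fun i k => P i * (p (Q1 k) * u i (Q0 k) + q2 k p * u i (Q1 k)))).
  apply sum_eq. intros k _. rewrite !Hw. rewrite !sum_scal_l. rewrite <- sum_plus.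
  apply sum_eq. intros; ring.
Qed.

Definition uvec (p : jet) (c : coord) (i : nat) : R :=
  match i with
  | O => match c with Z1 => 1 | _ => 0 end
  | S j => ifQ0 c (S j) + dvc c (H j) p
  end.

Lemma args_deriv p c i : is_derive (fun t => args (updJ p c t) i) (p c) (uvec p c i).
Proof.
  destruct i as [|j].
  - simpl. destruct (coord_eq_dec c Z1) as [->|Hne].
    + eapply is_derive_ext. 2: apply isd_id. intros t; simpl. rewrite upd_same; auto.
    + apply (is_derive_ext (fun _ => p Z1)).
      * intros t. simpl. rewrite upd_other; auto.
      * destruct c; try congruence; apply isd_const.
  - simpl. eapply is_derive_ext. 2: apply (lin_deriv (H j) p c (S j)); left; apply noI_H.
    intros t. simpl. rewrite DI_eq. auto.
Qed.

Lemma pdJ_DI j c p : pdJ c (DI j) p = uvec p c (S j).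
Proof.
  unfold pdJ, pd. apply is_derive_unique.
  pose proof (args_deriv p c (S j)) as Hd. simpl in Hd. exact Hd.
Qed.

Lemma Lop_u0 K p : Lop K p (fun c => uvec p c 0) = 0.
Proof.
  unfold Lop. simpl. rewrite (sum_eq _ (fun _ => 0)). rewrite sum_cte. ring.
  intros; ring.
Qed.

Lemma Lop_uS K p j : (S j <= K)%nat -> Jdom p -> Lop K p (fun c => uvec p c (S j)) = 0.
Proof.
  intros HK Hp. rewrite <- (Dh2_DI j K p HK Hp). rewrite Dh2_Lop. f_equal.
  apply functional_extensionality. intro c. symmetry. apply pdJ_DI.
Qed.

Lemma args_id p c : args (updJ p c (p c)) = args p.
Proof. rewrite upd_id. auto. Qed.

Theorem dir_back (N : nat) (alpha : jet -> R) :
  order_le cord N alpha ->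
  (forall p, Jdom p ->
        exists (r M : nat) (d e : R) (F : (nat -> R) -> R),
          0 < d /\ 0 < e /\
          order_le (fun i : nat => i) (S r) F /\
          smooth_on PeanoNat.Nat.eq_dec (fun i : nat => i)
            (fun x => near_ord (fun i : nat => i) (S r) e (args p) x) F /\
          (forall p', Jdom p' -> near_ord cord M d p p' ->
             near_ord (fun i : nat => i) (S r) e (args p) (args p') /\
             alpha p' = F (args p'))) ->
  forall p, Jdom p -> Dh2 N alpha p = 0.
Proof.
  intros Hord Hrep p Hp.
  destruct (Hrep p Hp) as [r [M [d [e [F [Hd [He [HFo [HFs Hloc]]]]]]]]].
  destruct (smooth_1 _ _ _ _ HFs) as [_ HF1].
  set (K := Nat.max N (S r)).
  rewrite (Dh2_extend alpha N K p Hord) by lia.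
  rewrite Dh2_Lop.
  set (P := fun i => pd PeanoNat.Nat.eq_dec i F (args p)).
  rewrite (Lop_lin K p _ P (fun i c => uvec p c i) (S r)).
  - rewrite (sum_eq _ (fun _ => 0)). rewrite sum_cte; ring.
    intros i Hi. destruct i as [|j].
    + rewrite Lop_u0. ring.
    + rewrite Lop_uS; auto; [ring|lia].
  - intros c.
    assert (Hloc' : locally (p c) (fun t => alpha (updJ p c t) = F (args (updJ p c t)))).
    { assert (Hpos : 0 < Rmin d (Rabs (p (Q1 0)))) by (apply Rmin_pos; auto; apply Jdom_pos; auto).
      exists (mkposreal _ Hpos). intros t Ht. simpl in Ht.
      change (Rabs (t - p c) < Rmin d (Rabs (p (Q1 0)))) in Ht.
      pose proof (Rmin_l d (Rabs (p (Q1 0)))). pose proof (Rmin_r d (Rabs (p (Q1 0)))).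
      apply Hloc.
      - apply Jdom_upd_near; auto. lra.
      - intros c' _. unfold upd. destruct (coord_eq_dec c' c) as [->|]. lra.
        replace (p c' - p c') with 0 by ring. rewrite Rabs_R0; auto. }
    unfold pdJ, pd.
    transitivity (Derive (fun t => F (args (updJ p c t))) (p c)).
    { apply Derive_ext_loc. exact Hloc'. }
    apply is_derive_unique.
    eapply is_derive_val.
    { apply (chain_gen PeanoNat.Nat.eq_dec (fun i : nat => i) F (S r) (S r) e
             (fun x => near_ord (fun i : nat => i) (S r) e (args p) x)
             (fun t => args (updJ p c t)) (fun i => uvec p c i) (seq 0 (S (S r)))); auto.
      + intros y Hy. rewrite args_id in Hy. auto.
      + intros c' y Hy. apply HF1; auto.
      + intros c' _. apply HF1.
      + apply seq_NoDup.
      + intros i Hi. apply in_seq. lia.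
      + intros i _. apply args_deriv. }
    rewrite lsum_seq, args_id. auto.
Qed.


Definition Phi (x : jet) : jet := fun c =>
  match c with Q0 (S j) => x (Q0 (S j)) - ev (H j) x | _ => x c end.
Definition Psi (x : jet) : jet := fun c =>
  match c with Q0 (S j) => x (Q0 (S j)) + ev (H j) x | _ => x c end.

Lemma Phi_Q1 x k : Phi x (Q1 k) = x (Q1 k).
Proof. reflexivity. Qed.
Lemma Psi_Q1 x k : Psi x (Q1 k) = x (Q1 k).
Proof. reflexivity. Qed.

Lemma Phi_Psi x : Phi (Psi x) = x.
Proof.
  apply functional_extensionality. intros c. destruct c as [| |[|j]|k]; simpl; auto.
  rewrite (ev_ext (H j) (Psi x) x) by (intros; apply Psi_Q1). ring.
Qed.

Lemma Jdom_Phi x : Jdom x -> Jdom (Phi x).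
Proof. auto. Qed.
Lemma Jdom_Psi x : Jdom x -> Jdom (Psi x).
Proof. auto. Qed.

Lemma ev_vb_ext n e x y : vb n e -> (forall k, (k <= n)%nat -> x (Q1 k) = y (Q1 k)) -> ev e x = ev e y.
Proof.
  induction e; simpl; intros Hv Hxy; auto.
  - rewrite Hxy; auto. lia.
  - destruct Hv. rewrite IHe1, IHe2; auto.
  - destruct Hv. rewrite IHe1, IHe2; auto.
Qed.

Definition ind (c' c : coord) : R := if coord_eq_dec c' c then 1 else 0.

Lemma ind_deriv x c' c : is_derive (fun t => updJ x c' t c) (x c') (ind c' c).
Proof.
  unfold ind. destruct (coord_eq_dec c' c) as [->|Hne].
  - eapply is_derive_ext. 2: apply isd_id. intros t; simpl. rewrite upd_same; auto.
  - apply (is_derive_ext (fun _ => x c)). 2: apply isd_const.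
    intros t. rewrite upd_other; auto.
Qed.

Definition hcor (c' c : coord) (x : jet) : R :=
  match c with Q0 (S j) => dvc c' (H j) x | _ => 0 end.

Definition dPhi (c' c : coord) (x : jet) : R := ind c' c - hcor c' c x.

Lemma Phi_deriv_gen x c' c : (forall j, c <> Q0 (S j)) ->
  is_derive (fun t => Phi (updJ x c' t) c) (x c') (dPhi c' c x).
Proof.
  intros Hc.
  assert (E : forall t, Phi (updJ x c' t) c = updJ x c' t c).
  { intros t. destruct c as [| |[|j]|k]; auto. exfalso; apply (Hc j); auto. }
  assert (E2 : dPhi c' c x = ind c' c).
  { unfold dPhi, hcor. destruct c as [| |[|j]|k]; try ring. exfalso; apply (Hc j); auto. }
  rewrite E2. apply (is_derive_ext (fun t => updJ x c' t c)); [intros; auto|].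
  apply ind_deriv.
Qed.

Lemma Phi_deriv x c' c : is_derive (fun t => Phi (updJ x c' t) c) (x c') (dPhi c' c x).
Proof.
  destruct c as [| |[|j]|k]; try (apply Phi_deriv_gen; intros jj HH; discriminate).
  apply (is_derive_ext (fun t => updJ x c' t (Q0 (S j)) - ev (H j) (updJ x c' t))); [intros; reflexivity|].
  apply (is_derive_minus _ _ _ _ _ (ind_deriv x c' (Q0 (S j))) (ev_deriv (H j) x c' (or_introl (noI_H j)))).
Qed.

Lemma Q_diff m : forall x s, Jdom x ->
  ev (Q m) (updJ x (Q1 (S m)) s) = ev (Q m) x - (s - x (Q1 (S m))) * / x (Q1 0).
Proof.
  induction m; intros x s Hx.
  - change (ev (Q 0) (updJ x (Q1 1) s)) with (-1 * (updJ x (Q1 1) s (Q1 1) * / updJ x (Q1 1) s (Q1 0))).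
    change (ev (Q 0) x) with (-1 * (x (Q1 1) * / x (Q1 0))).
    rewrite upd_same, (upd_other _ _ _ (Q1 0)) by discriminate. ring.
  - assert (Hd : ev (dv (S m) (Q m)) x = - / x (Q1 0)).
    { pose proof (ev_deriv_Q1 (Q m) x (S m) (or_intror Hx)) as H1.
      assert (H2 : is_derive (fun t => ev (Q m) (updJ x (Q1 (S m)) t)) (x (Q1 (S m))) (- / x (Q1 0))).
      { apply (is_derive_ext (fun t => ev (Q m) x - (t - x (Q1 (S m))) * / x (Q1 0))).
        - intros t. rewrite IHm; auto.
        - auto_derive; auto. ring. }
      apply is_derive_unique in H1. apply is_derive_unique in H2. congruence. }
    change (Q (S m)) with (Dsym (S m) (Q m)). rewrite !ev_Dsym.
    rewrite !tech5.
    rewrite (sum_eq (fun k => updJ x (Q1 (S (S m))) s (Q1 (S k)) * ev (dv k (Q m)) (updJ x (Q1 (S (S m))) s))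
                    (fun k => x (Q1 (S k)) * ev (dv k (Q m)) x)).
    2:{ intros i Hi. rewrite upd_other by (intros E; injection E; lia).
        rewrite (vb_upd (S m)); auto. apply vb_dv. apply vb_Q. }
    rewrite upd_same.
    rewrite (vb_upd (S m)) by (auto; apply vb_dv; apply vb_Q).
    rewrite Hd. ring.
Qed.

Section Beta.
Variable N : nat.
Variable alpha : jet -> R.
Hypothesis Hord : order_le cord N alpha.
Hypothesis Hsm : smooth_on coord_eq_dec cord Jdom alpha.

Definition beta (x : jet) : R := alpha (Phi x).

Lemma beta_ord : order_le cord N beta.
Proof.
  intros x y Hxy. unfold beta. apply Hord. intros c Hc.
  destruct c as [| |[|j]|k]; simpl; try (apply Hxy; auto).
  rewrite Hxy by auto. f_equal. apply (ev_vb_ext j); auto using vb_H.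
  intros k Hk. apply Hxy. simpl in *. lia.
Qed.

Lemma alpha_beta y : alpha y = beta (Psi y).
Proof. unfold beta. rewrite Phi_Psi. auto. Qed.

Lemma beta_deriv x c' : Jdom x ->
  is_derive (fun t => beta (updJ x c' t)) (x c')
    (lsum (enumN N) (fun c => pdJ c alpha (Phi x) * dPhi c' c x)).
Proof.
  intros Hx. destruct (smooth_1 _ _ _ _ Hsm) as [_ Ha1].
  pose proof (chain_gen coord_eq_dec cord alpha N 0 (Rabs (x (Q1 0))) Jdom
     (fun t => Phi (updJ x c' t)) (fun c => dPhi c' c x) (enumN N) (x c') Hord) as Hc.
  cbv beta in Hc. rewrite upd_id in Hc. apply Hc.
  - apply Jdom_pos; auto.
  - intros y Hy. apply (Jdom_open (Phi x)); auto.
  - intros c y Hy. apply Ha1; auto.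
  - intros c _. apply Ha1.
  - apply enumN_nodup.
  - apply enumN_cover.
  - intros c _. apply Phi_deriv.
Qed.

Lemma beta_pd x c' : Jdom x ->
  pdJ c' beta x = lsum (enumN N) (fun c => pdJ c alpha (Phi x) * dPhi c' c x).
Proof. intros Hx. unfold pdJ at 1, pd. apply is_derive_unique. apply beta_deriv; auto. Qed.

Lemma beta_exd x c' : Jdom x -> ex_derive (fun t => beta (updJ x c' t)) (x c').
Proof. intros Hx. eexists. apply beta_deriv; auto. Qed.


Lemma In_enumN c : In c (enumN N) -> (cord c <= N)%nat.
Proof.
  unfold enumN. intros [<-|[<-|H]]; simpl; try lia.
  apply in_app_or in H. destruct H as [H|H]; apply in_map_iff in H;
  destruct H as [k [<- Hk]]; apply in_seq in Hk; simpl; lia.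
Qed.

Definition Wv (c : coord) (x : jet) : R :=
  match c with Z1 => 0 | Z2 => 1 | Q0 m => x (Q1 m) | Q1 m => q2 m x end.

Lemma ind_ne c' c : c' <> c -> ind c' c = 0.
Proof. intros H. unfold ind. destruct (coord_eq_dec c' c); congruence. Qed.
Lemma ind_eq c : ind c c = 1.
Proof. unfold ind. destruct (coord_eq_dec c c); congruence. Qed.
Lemma ind_Q1 k m : ind (Q1 k) (Q1 m) = if Nat.eq_dec k m then 1 else 0.
Proof.
  unfold ind. destruct (Nat.eq_dec k m) as [->|Hne].
  - destruct (coord_eq_dec (Q1 m) (Q1 m)); congruence.
  - destruct (coord_eq_dec (Q1 k) (Q1 m)) as [E|]; auto. injection E; congruence.
Qed.

Lemma sum_zero n (f : nat -> R) : (forall k, (k <= n)%nat -> f k = 0) -> sum_f_R0 f n = 0.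
Proof. intros Hf. rewrite (sum_eq _ (fun _ => 0)) by auto. rewrite sum_cte. ring. Qed.

Lemma sum_opp' (f : nat -> R) n : sum_f_R0 (fun k => - f k) n = - sum_f_R0 f n.
Proof. induction n; simpl; [auto|rewrite IHn; ring]. Qed.

Lemma W_calc c x : (cord c <= N)%nat -> Jdom x ->
  dPhi Z2 c x + x (Q1 0) * dPhi (Q0 0) c x + sum_f_R0 (fun k => q2 k x * dPhi (Q1 k) c x) N = Wv c x.
Proof.
  intros Hc Hx. unfold dPhi, hcor. destruct c as [| |[|j]|m]; simpl in Hc.
  - rewrite !ind_ne by discriminate. rewrite sum_zero. simpl; ring.
    intros k _. rewrite ind_ne by discriminate. ring.
  - rewrite ind_eq, ind_ne by discriminate. rewrite sum_zero. simpl; ring.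
    intros k _. rewrite ind_ne by discriminate. ring.
  - rewrite ind_eq, ind_ne by discriminate. rewrite sum_zero. simpl; ring.
    intros k _. rewrite ind_ne by discriminate. ring.
  - rewrite !ind_ne by discriminate. simpl.
    rewrite (sum_eq _ (fun k => - (ev (Q k) x * ev (dv k (H j)) x))).
    2:{ intros k _. rewrite ind_ne by discriminate. rewrite q2_eq by auto. ring. }
    rewrite sum_opp'. rewrite EH by (auto; lia). ring.
  - rewrite !ind_ne by discriminate. simpl.
    rewrite (sum_eq _ (fun k => (if Nat.eq_dec k m then 1 else 0) * q2 k x)).
    2:{ intros k _. rewrite ind_Q1. ring. }
    rewrite sum_delta by lia. ring.
Qed.

Lemma beta_ident x : Jdom x -> (forall p, Jdom p -> Dh2 N alpha p = 0) ->
  pdJ Z2 beta x + x (Q1 0) * pdJ (Q0 0) beta x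
  + sum_f_R0 (fun k => q2 k x * pdJ (Q1 k) beta x) N = 0.
Proof.
  intros Hx Hdh.
  set (A := fun c => pdJ c alpha (Phi x)).
  rewrite !beta_pd by auto.
  rewrite (sum_eq _ (fun k => lsum (enumN N) (fun c => q2 k x * (A c * dPhi (Q1 k) c x)))).
  2:{ intros k _. rewrite beta_pd by auto. apply lsum_scal. }
  rewrite <- (lsum_sum (enumN N) (fun c k => q2 k x * (A c * dPhi (Q1 k) c x))).
  rewrite lsum_scal. rewrite <- !lsum_plus.
  rewrite (lsum_ext _ _ (fun c => A c * Wv c x)).
  2:{ intros c Hc. rewrite <- W_calc by (auto; apply In_enumN; auto).
      rewrite !Rmult_plus_distr_l. rewrite (sum_scal_l _ (A c)).
      rewrite (sum_eq (fun k => q2 k x * (A c * dPhi (Q1 k) c x)) (fun i => A c * (q2 i x * dPhi (Q1 i) c x)))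
        by (intros; ring).
      unfold A. ring. }
  rewrite lsum_enumN. simpl Wv. rewrite Rmult_0_r, Rplus_0_l.
  rewrite <- (Hdh (Phi x)) by auto. unfold Dh2. unfold A.
  rewrite sum_plus.
  rewrite (sum_eq (fun k => q2 k (Phi x) * pdJ (Q1 k) alpha (Phi x)) (fun k => pdJ (Q1 k) alpha (Phi x) * q2 k x)).
  2:{ intros k _. rewrite !q2_eq by auto. rewrite (ev_ext (Q k) (Phi x) x) by auto. ring. }
  rewrite (sum_eq (fun k => Phi x (Q1 k) * pdJ (Q0 k) alpha (Phi x)) (fun k => pdJ (Q0 k) alpha (Phi x) * x (Q1 k)))
    by (intros; simpl; ring).
  ring.
Qed.

Definition Bv (k : nat) (x : jet) : R := pdJ (Q1 k) beta x.

Lemma beta_line y c a b :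
  (forall u, Rmin a b <= u <= Rmax a b -> Jdom (updJ y c u)) ->
  (forall z, Jdom z -> pdJ c beta z = 0) ->
  beta (updJ y c a) = beta (updJ y c b).
Proof.
  intros Hseg Hz. apply const_line. intros u Hu.
  assert (Hd : is_derive (fun t => beta (updJ y c t)) u (pd coord_eq_dec c beta (updJ y c u))).
  { apply line_deriv. apply beta_exd. apply Hseg; auto. }
  split. eexists; eauto.
  replace (Derive (fun t => beta (updJ y c t)) u) with (pd coord_eq_dec c beta (updJ y c u)).
  - apply Hz. apply Hseg; auto.
  - symmetry. apply is_derive_unique. exact Hd.
Qed.

Lemma upd_comm (x : jet) c d s t : c <> d -> updJ (updJ x c s) d t = updJ (updJ x d t) c s.
Proof.
  intros H. apply functional_extensionality. intros e. unfold upd.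
  destruct (coord_eq_dec e d); destruct (coord_eq_dec e c); subst; auto. congruence.
Qed.

Lemma beta_indep_Q1 k : (1 <= k)%nat ->
  ((N < k)%nat \/ forall z, Jdom z -> Bv k z = 0) ->
  forall y s, Jdom y -> beta (updJ y (Q1 k) s) = beta y.
Proof.
  intros Hk [HN|Hz] y s Hy.
  - apply beta_ord. intros c Hc. rewrite upd_other; auto. intros ->. simpl in Hc. lia.
  - rewrite <- (upd_id coord_eq_dec y (Q1 k)) at 2. apply beta_line; auto.
    intros u _. unfold Jdom. rewrite upd_other; auto. intros E; injection E; lia.
Qed.

Lemma sum_tail0' (f : nat -> R) a m :
  (forall k, (a < k <= m)%nat -> f k = 0) -> (a <= m)%nat -> sum_f_R0 f m = sum_f_R0 f a.
Proof.
  intros H Ham. induction m.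
  - assert (a = 0)%nat by lia. subst. auto.
  - destruct (Nat.eq_dec a (S m)) as [->|Hne]; auto.
    rewrite tech5. rewrite IHm by (try lia; intros; apply H; lia). rewrite H by lia. ring.
Qed.

Lemma pd_same_loc c x x' : x' c = x c -> Jdom x ->
  (forall t, Jdom (updJ x c t) -> beta (updJ x' c t) = beta (updJ x c t)) ->
  pdJ c beta x' = pdJ c beta x.
Proof.
  intros Hc Hx Heq. unfold pdJ, pd. rewrite Hc. apply Derive_ext_loc.
  destruct (Jdom_loc x c Hx) as [eps He]. exists eps. intros t Ht. apply Heq. apply He; auto.
Qed.

Hypothesis Hdh : forall p, Jdom p -> Dh2 N alpha p = 0.

Lemma descent_step m : (m <= N)%nat ->
  (forall z, Jdom z -> forall k, (m < k <= N)%nat -> Bv k z = 0) ->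
  forall x, Jdom x -> Bv m x = 0.
Proof.
  intros HmN Hhi x Hx.
  set (x' := updJ x (Q1 (S m)) (x (Q1 (S m)) + 1)).
  assert (Hx' : Jdom x').
  { unfold Jdom, x'. rewrite upd_other; auto. intros E; injection E; lia. }
  assert (Hv0 : x' (Q1 0) = x (Q1 0)).
  { unfold x'. rewrite upd_other; auto. intros E; injection E; lia. }
  assert (Hind : forall y s, Jdom y -> beta (updJ y (Q1 (S m)) s) = beta y).
  { apply beta_indep_Q1; [lia|]. destruct (Compare_dec.le_lt_dec (S m) N) as [Hle|Hlt].
    - right. intros z Hz. apply Hhi; [auto|lia].
    - left; exact Hlt. }
  assert (Hpd : forall c, c <> Q1 (S m) -> pdJ c beta x' = pdJ c beta x).
  { intros c Hc. apply pd_same_loc; auto.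
    - unfold x'. rewrite upd_other; auto.
    - intros t Ht. unfold x'. rewrite upd_comm by auto. apply Hind; auto. }
  pose proof (beta_ident x Hx Hdh) as I1.
  pose proof (beta_ident x' Hx' Hdh) as I2.
  rewrite (sum_tail0' _ m N) in I1 by (auto; intros k Hk; unfold Bv in Hhi; rewrite Hhi by (auto; lia); ring).
  rewrite (sum_tail0' _ m N) in I2 by (auto; intros k Hk; unfold Bv in Hhi; rewrite Hhi by (auto; lia); ring).
  rewrite Hv0, !Hpd in I2 by discriminate.
  rewrite (sum_eq (fun k => q2 k x' * pdJ (Q1 k) beta x')
            (fun k => q2 k x * pdJ (Q1 k) beta x
                      + (if Nat.eq_dec k m then 1 else 0) * (- / x (Q1 0) * pdJ (Q1 k) beta x))) in I2.
  2:{ intros k Hk. rewrite Hpd by (intros E; injection E; lia).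
      rewrite !q2_eq by auto.
      destruct (Nat.eq_dec k m) as [->|Hne].
      - unfold x'. rewrite Q_diff by auto. ring.
      - unfold x'. rewrite (vb_upd (S k)) by (auto using vb_Q; lia). ring. }
  rewrite sum_plus, sum_delta in I2 by lia.
  assert (E : - / x (Q1 0) * pdJ (Q1 m) beta x = 0) by lra.
  apply Rmult_integral in E. destruct E as [E|E]; auto.
  exfalso. apply (Rinv_neq_0_compat (x (Q1 0))); auto. lra.
Qed.

Lemma descent : forall k, (k <= N)%nat -> forall x, Jdom x -> Bv k x = 0.
Proof.
  assert (aux : forall i k, (N - i <= k <= N)%nat -> forall x, Jdom x -> Bv k x = 0).
  { induction i; intros k Hk.
    - apply descent_step. lia. intros z Hz k' Hk'. lia.
    - destruct (Compare_dec.le_lt_dec (N - i) k).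
      + apply IHi. lia.
      + apply descent_step. lia. intros z Hz k' Hk'. apply IHi; auto. lia. }
  intros k Hk. apply (aux N). lia.
Qed.

Lemma seg_sign a b u : 0 < a * b -> Rmin a b <= u <= Rmax a b -> 0 < u * a.
Proof.
  intros Hab Hu. unfold Rmin, Rmax in Hu.
  destruct (Rle_dec a b); destruct (Rlt_dec 0 a) as [Ha|Ha].
  - assert (0 < b) by nra. nra.
  - assert (a < 0) by (destruct (Req_dec a 0); [subst; lra| lra]). assert (b < 0) by nra. nra.
  - assert (0 < b) by nra. nra.
  - assert (a < 0) by (destruct (Req_dec a 0); [subst; lra| lra]). assert (b < 0) by nra. nra.
Qed.

Lemma beta_v0 y s : Jdom y -> 0 < y (Q1 0) * s -> beta (updJ y (Q1 0) s) = beta y.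
Proof.
  intros Hy Hs. rewrite <- (upd_id coord_eq_dec y (Q1 0)) at 2. symmetry. apply beta_line.
  - intros u Hu. unfold Jdom. rewrite upd_same. pose proof (seg_sign _ _ _ Hs Hu) as Hsg. intros E. rewrite E in Hsg. lra.
  - intros z Hz. apply (descent 0); auto. lia.
Qed.

Lemma z2_u0_zero x : Jdom x -> pdJ Z2 beta x = 0 /\ pdJ (Q0 0) beta x = 0.
Proof.
  assert (Hb : forall x, Jdom x -> pdJ Z2 beta x + x (Q1 0) * pdJ (Q0 0) beta x = 0).
  { intros y Hy. pose proof (beta_ident y Hy Hdh) as I.
    rewrite sum_zero in I. lra. intros k Hk. change (pdJ (Q1 k) beta y) with (Bv k y). rewrite descent; auto. ring. }
  intros Hx.
  set (x'' := updJ x (Q1 0) (2 * x (Q1 0))).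
  assert (Hx'' : Jdom x'').
  { unfold Jdom, x''. rewrite upd_same. unfold Jdom in Hx. lra. }
  assert (Hpd : forall c, c <> Q1 0 -> pdJ c beta x'' = pdJ c beta x).
  { intros c Hc. unfold pdJ, pd. unfold x''. rewrite upd_other by auto. apply Derive_ext. intros t.
    rewrite upd_comm by auto. apply beta_v0.
    - unfold Jdom. rewrite upd_other; auto.
    - rewrite upd_other by auto. unfold Jdom in Hx. assert (0 < x (Q1 0) * x (Q1 0)) by (apply Rsqr_pos_lt; auto). lra. }
  pose proof (Hb x Hx) as B1. pose proof (Hb x'' Hx'') as B2.
  rewrite !Hpd in B2 by discriminate. unfold x'' in B2. rewrite upd_same in B2.
  assert (E : x (Q1 0) * pdJ (Q0 0) beta x = 0) by lra.
  apply Rmult_integral in E. destruct E as [E|E]; [exfalso; apply Hx; auto|]. split; lra.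
Qed.

Lemma beta_list cs : (forall c, In c cs -> forall z, Jdom z -> pdJ c beta z = 0) ->
  forall X Y, Jdom X -> Jdom Y -> 0 < X (Q1 0) * Y (Q1 0) ->
  (forall c, (cord c <= N)%nat -> ~ In c cs -> X c = Y c) -> beta X = beta Y.
Proof.
  induction cs as [|c cs IH]; intros Hz X Y HX HY Hs Hagree.
  - apply beta_ord. intros c Hc. apply Hagree; auto.
  - set (X1 := updJ X c (Y c)).
    assert (HX1v : X1 (Q1 0) = (if coord_eq_dec c (Q1 0) then Y (Q1 0) else X (Q1 0))).
    { unfold X1. destruct (coord_eq_dec c (Q1 0)) as [->|Hne]. apply upd_same. apply upd_other; auto. }
    assert (E1 : beta X = beta X1).
    { rewrite <- (upd_id coord_eq_dec X c) at 1. unfold X1. apply beta_line.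
      - intros u Hu. unfold Jdom. destruct (coord_eq_dec c (Q1 0)) as [->|Hne].
        + rewrite upd_same. pose proof (seg_sign _ _ _ Hs Hu) as Hsg. intros E. rewrite E in Hsg. lra.
        + rewrite upd_other; auto.
      - apply Hz. left; auto. }
    rewrite E1. apply IH.
    + intros c' Hc'. apply Hz. right; auto.
    + unfold Jdom. rewrite HX1v. destruct (coord_eq_dec c (Q1 0)); auto.
    + auto.
    + rewrite HX1v. destruct (coord_eq_dec c (Q1 0)); auto. nra.
    + intros c' Hc' Hnin. unfold X1. destruct (coord_eq_dec c' c) as [->|Hne].
      * apply upd_same.
      * rewrite upd_other; auto. apply Hagree; auto. intros [E|E]; auto.
Qed.

End Beta.


Definition ctsM (M : nat) (f : jet -> R) (p : jet) : Prop :=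
  forall eps, 0 < eps -> exists d, 0 < d /\ forall y, near_ord cord M d p y -> Rabs (f y - f p) < eps.

Lemma near_le M d d' (p y : jet) : d <= d' -> near_ord cord M d p y -> near_ord cord M d' p y.
Proof. intros Hd H c Hc. specialize (H c Hc). lra. Qed.

Lemma near_leM M M' d (p y : jet) : (M <= M')%nat -> near_ord cord M' d p y -> near_ord cord M d p y.
Proof. intros HM H c Hc. apply H. lia. Qed.

Lemma cts_const M a p : ctsM M (fun _ => a) p.
Proof. intros eps He. exists 1. split; [lra|]. intros. replace (a - a) with 0 by ring. rewrite Rabs_R0; auto. Qed.

Lemma cts_coord M c p : (cord c <= M)%nat -> ctsM M (fun q => q c) p.
Proof. intros Hc eps He. exists eps. split; auto. Qed.

Lemma cts_plus M f g p : ctsM M f p -> ctsM M g p -> ctsM M (fun q => f q + g q) p.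
Proof.
  intros Hf Hg eps He.
  destruct (Hf (eps/2) ltac:(lra)) as [d1 [Hd1 H1]]. destruct (Hg (eps/2) ltac:(lra)) as [d2 [Hd2 H2]].
  exists (Rmin d1 d2). split. apply Rmin_pos; auto.
  intros y Hy. pose proof (H1 y (near_le _ _ _ _ _ (Rmin_l d1 d2) Hy)).
  pose proof (H2 y (near_le _ _ _ _ _ (Rmin_r d1 d2) Hy)).
  replace (f y + g y - (f p + g p)) with ((f y - f p) + (g y - g p)) by ring.
  eapply Rle_lt_trans. apply Rabs_triang. lra.
Qed.

Lemma cts_mult M f g p : ctsM M f p -> ctsM M g p -> ctsM M (fun q => f q * g q) p.
Proof.
  intros Hf Hg eps He.
  set (a0 := f p). set (b0 := g p).
  assert (Ha : 0 < Rabs a0 + 1) by (pose proof (Rabs_pos a0); lra).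
  assert (Hb : 0 < Rabs b0 + 1) by (pose proof (Rabs_pos b0); lra).
  set (eg := Rmin 1 (eps / (2 * (Rabs a0 + 1)))).
  assert (Heg : 0 < eg) by (apply Rmin_pos; [lra|apply Rdiv_lt_0_compat; lra]).
  set (ef := eps / (2 * (Rabs b0 + 1))).
  assert (Hef : 0 < ef) by (apply Rdiv_lt_0_compat; lra).
  destruct (Hf ef Hef) as [d1 [Hd1 H1]]. destruct (Hg eg Heg) as [d2 [Hd2 H2]].
  exists (Rmin d1 d2). split. apply Rmin_pos; auto.
  intros y Hy. pose proof (H1 y (near_le _ _ _ _ _ (Rmin_l d1 d2) Hy)) as F1.
  pose proof (H2 y (near_le _ _ _ _ _ (Rmin_r d1 d2) Hy)) as G1. fold a0 b0 in F1, G1.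
  replace (f y * g y - a0 * b0) with ((f y - a0) * g y + a0 * (g y - b0)) by ring.
  eapply Rle_lt_trans. apply Rabs_triang. rewrite (Rabs_mult (f y - a0)), (Rabs_mult a0).
  assert (eg1 : eg <= 1) by apply Rmin_l.
  assert (eg2 : eg <= eps / (2 * (Rabs a0 + 1))) by apply Rmin_r.
  assert (Hgy : Rabs (g y) <= Rabs b0 + 1).
  { replace (g y) with ((g y - b0) + b0) by ring. eapply Rle_trans. apply Rabs_triang. lra. }
  assert (T1 : Rabs (f y - a0) * Rabs (g y) <= ef * (Rabs b0 + 1)).
  { apply Rmult_le_compat; auto using Rabs_pos; lra. }
  assert (E1 : ef * (Rabs b0 + 1) = eps / 2) by (unfold ef; field; lra).
  assert (T2 : Rabs a0 * Rabs (g y - b0) <= Rabs a0 * (eps / (2 * (Rabs a0 + 1)))).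
  { apply Rmult_le_compat_l. apply Rabs_pos. lra. }
  assert (T3 : Rabs a0 * (eps / (2 * (Rabs a0 + 1))) < eps / 2).
  { replace (Rabs a0 * (eps / (2 * (Rabs a0 + 1)))) with ((eps / 2) * (Rabs a0 / (Rabs a0 + 1))) by (field; lra).
    assert (Rabs a0 / (Rabs a0 + 1) < 1).
    { apply (Rmult_lt_reg_r (Rabs a0 + 1)); auto. unfold Rdiv. rewrite Rmult_assoc, Rinv_l by lra. lra. }
    nra. }
  lra.
Qed.

Lemma cts_inv M f p : ctsM M f p -> f p <> 0 -> ctsM M (fun q => / f q) p.
Proof.
  intros Hf Hp eps He.
  set (a0 := f p).
  assert (Ha : 0 < Rabs a0) by (apply Rabs_pos_lt; auto).
  set (eta := Rmin (Rabs a0 / 2) (eps * (Rabs a0 * Rabs a0) / 2)).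
  assert (Heta : 0 < eta) by (apply Rmin_pos; [lra| apply Rdiv_lt_0_compat; [apply Rmult_lt_0_compat; [lra|nra]|lra]]).
  destruct (Hf eta Heta) as [d [Hd H1]]. exists d. split; auto.
  intros y Hy. specialize (H1 y Hy). fold a0 in H1.
  assert (e1 : eta <= Rabs a0 / 2) by apply Rmin_l.
  assert (e2 : eta <= eps * (Rabs a0 * Rabs a0) / 2) by apply Rmin_r.
  assert (Hfy : Rabs a0 / 2 < Rabs (f y)).
  { assert (Rabs a0 <= Rabs (a0 - f y) + Rabs (f y)).
    { replace a0 with ((a0 - f y) + f y) at 1 by ring. apply Rabs_triang. }
    rewrite Rabs_minus_sym in H1. lra. }
  assert (Hfy0 : f y <> 0).
  { intros E. rewrite E, Rabs_R0 in Hfy. lra. }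
  assert (Eq : Rabs (/ f y - / a0) * (Rabs (f y) * Rabs a0) = Rabs (a0 - f y)).
  { rewrite <- !Rabs_mult. f_equal. field. split; auto. }
  apply (Rmult_lt_reg_r (Rabs (f y) * Rabs a0)). apply Rmult_lt_0_compat; lra.
  fold a0. rewrite Eq. rewrite Rabs_minus_sym.
  apply Rlt_le_trans with eta; auto.
  apply Rle_trans with (eps * (Rabs a0 * Rabs a0) / 2); auto.
  assert (Rabs a0 * Rabs a0 / 2 <= Rabs (f y) * Rabs a0) by nra.
  nra.
Qed.

Lemma cts_ev M e p : vb M e -> Jdom p -> ctsM M (ev e) p.
Proof.
  intros Hv Hp. induction e; simpl in Hv.
  - apply cts_const.
  - apply (cts_coord M (Q1 k)). simpl; auto.
  - apply (cts_inv M (fun q => q (Q1 0))); auto. apply cts_coord. simpl; lia.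
  - destruct Hv. apply (cts_plus M (ev e1) (ev e2)); auto.
  - destruct Hv. apply (cts_mult M (ev e1) (ev e2)); auto.
Qed.

Lemma cts_DI N j p : (j <= N)%nat -> Jdom p -> ctsM (S N) (DI j) p.
Proof.
  intros Hj Hp. rewrite DI_fun.
  apply (cts_plus (S N) (fun q => q (Q0 (S j))) (ev (H j))).
  - apply cts_coord. simpl. lia.
  - apply cts_ev; auto. apply (vb_mono j). lia. apply vb_H.
Qed.

Lemma cts_finite M (f : nat -> jet -> R) p n :
  (forall j, (j <= n)%nat -> ctsM M (f j) p) ->
  exists d, 0 < d /\ forall y, near_ord cord M d p y -> forall j, (j <= n)%nat -> Rabs (f j y - f j p) < 1.
Proof.
  induction n; intros Hc.
  - destruct (Hc 0%nat (le_n 0) 1 Rlt_0_1) as [d [Hd H1]]. exists d. split; auto.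
    intros y Hy j Hj. assert (j = 0)%nat by lia. subst. auto.
  - destruct IHn as [d1 [Hd1 H1]]. intros; apply Hc; lia.
    destruct (Hc (S n) (le_n _) 1 Rlt_0_1) as [d2 [Hd2 H2]].
    exists (Rmin d1 d2). split. apply Rmin_pos; auto.
    intros y Hy j Hj. destruct (Nat.eq_dec j (S n)) as [->|Hne].
    + apply H2. eapply near_le; [|exact Hy]. apply Rmin_r.
    + apply H1; [|lia]. eapply near_le; [|exact Hy]. apply Rmin_l.
Qed.

(* ---------- the section map ---------- *)
Definition sfun (p : jet) (y : nat -> R) : jet := fun c =>
  match c with
  | Z1 => y O
  | Q0 (S j) => y (S j) - ev (H j) p
  | _ => p c
  end.

Definition cm (i : nat) : coord := match i with O => Z1 | S j => Q0 (S j) end.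
Definition kap (p : jet) (i : nat) : R := match i with O => 0 | S j => ev (H j) p end.

Lemma sfun_upd p y i t :
  sfun p (upd PeanoNat.Nat.eq_dec y i t) = updJ (sfun p y) (cm i) (t - kap p i).
Proof.
  apply functional_extensionality. intros c. unfold upd, sfun, cm, kap.
  destruct c as [| |[|j]|k]; destruct i as [|i];
  repeat match goal with
         | |- context [Nat.eq_dec ?a ?b] => destruct (Nat.eq_dec a b)
         | |- context [coord_eq_dec ?a ?b] => destruct (coord_eq_dec a b)
         end;
  try (match goal with H : Q0 _ = Q0 _ |- _ => injection H; intros end);
  try congruence; try lia; try ring.
Qed.

Lemma sfun_Q1 p y k : sfun p y (Q1 k) = p (Q1 k).
Proof. reflexivity. Qed.

Lemma sfun_Jdom p y : Jdom p -> Jdom (sfun p y).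
Proof. auto. Qed.

Lemma sfun_cm p y i : sfun p y (cm i) = y i - kap p i.
Proof. destruct i; simpl; ring. Qed.

Lemma cont_transfer p (D : (nat -> R) -> Prop) f : Jdom p ->
  cont_on cord Jdom f -> cont_on (fun i : nat => i) D (fun y => f (sfun p y)).
Proof.
  intros Hp Hf y _ eps He.
  destruct (Hf (sfun p y) (sfun_Jdom p y Hp) eps He) as [M [d [Hd H1]]].
  exists M, d. split; auto. intros y' _ Hy'. apply H1. apply sfun_Jdom; auto.
  intros c Hc. destruct c as [| |[|j]|k]; simpl; simpl in Hc.
  - apply Hy'. lia.
  - replace (p Z2 - p Z2) with 0 by ring. rewrite Rabs_R0; auto.
  - replace (p (Q0 0) - p (Q0 0)) with 0 by ring. rewrite Rabs_R0; auto.
  - replace (y' (S j) - ev (H j) p - (y (S j) - ev (H j) p)) with (y' (S j) - y (S j)) by ring.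
    apply Hy'. lia.
  - replace (p (Q1 k) - p (Q1 k)) with 0 by ring. rewrite Rabs_R0; auto.
Qed.

Lemma sfun_deriv p f y i : Jdom p ->
  ex_derive (fun u => f (updJ (sfun p y) (cm i) u)) (sfun p y (cm i)) ->
  is_derive (fun t => f (sfun p (upd PeanoNat.Nat.eq_dec y i t))) (y i)
     (pd coord_eq_dec (cm i) f (sfun p y)).
Proof.
  intros Hp Hex.
  apply (is_derive_ext (fun t => f (updJ (sfun p y) (cm i) (t - kap p i)))).
  { intros t. rewrite sfun_upd. auto. }
  assert (Hg : is_derive (fun t : R => t - kap p i) (y i) 1).
  { auto_derive; auto. }
  rewrite sfun_cm in Hex.
  pose proof (is_derive_comp (fun u => f (updJ (sfun p y) (cm i) u)) (fun t => t - kap p i) (y i)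
     _ _ (Derive_correct _ _ Hex) Hg) as Hc.
  eapply is_derive_ext; [|eapply is_derive_val; [exact Hc|]].
  { intros; auto. }
  unfold scal; simpl. unfold mult; simpl. unfold pd. rewrite sfun_cm. ring.
Qed.

Lemma Ck_transfer p (D : (nat -> R) -> Prop) k : Jdom p ->
  forall f, Ck_on coord_eq_dec cord Jdom k f ->
  Ck_on PeanoNat.Nat.eq_dec (fun i : nat => i) D k (fun y => f (sfun p y)).
Proof.
  intros Hp. induction k; intros f Hf.
  - simpl in *. apply cont_transfer; auto.
  - simpl in Hf |- *. destruct Hf as [Hc Hd]. split.
    + apply cont_transfer; auto.
    + intros i. destruct (Hd (cm i)) as [Hex Hck].
      assert (Hder : forall y, is_derive (fun t => f (sfun p (upd PeanoNat.Nat.eq_dec y i t))) (y i)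
                                 (pd coord_eq_dec (cm i) f (sfun p y))).
      { intros y. apply sfun_deriv; [auto| apply Hex; apply sfun_Jdom; auto]. }
      split.
      * intros y _. eexists. apply Hder.
      * assert (E : pd PeanoNat.Nat.eq_dec i (fun y => f (sfun p y)) = (fun y => pd coord_eq_dec (cm i) f (sfun p y))).
        { apply functional_extensionality. intros y. unfold pd at 1. apply is_derive_unique. apply Hder. }
        rewrite E. apply IHk. auto.
Qed.

Lemma sign_close a b : Rabs (a - b) < Rabs b -> 0 < a * b.
Proof.
  unfold Rabs. destruct (Rcase_abs (a - b)); destruct (Rcase_abs b); intros; nra.
Qed.

Theorem dir_fwd (N : nat) (alpha : jet -> R) :
  order_le cord N alpha ->
  smooth_on coord_eq_dec cord Jdom alpha ->
  (forall p, Jdom p -> Dh2 N alpha p = 0) ->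
  forall p, Jdom p ->
        exists (r M : nat) (d e : R) (F : (nat -> R) -> R),
          0 < d /\ 0 < e /\
          order_le (fun i : nat => i) (S r) F /\
          smooth_on PeanoNat.Nat.eq_dec (fun i : nat => i)
            (fun x => near_ord (fun i : nat => i) (S r) e (args p) x) F /\
          (forall p', Jdom p' -> near_ord cord M d p p' ->
             near_ord (fun i : nat => i) (S r) e (args p) (args p') /\
             alpha p' = F (args p')).
Proof.
  intros Hord Hsm Hdh p Hp.
  destruct (cts_finite (S N) DI p N) as [dD [HdD HD]].
  { intros j Hj. apply cts_DI; auto. }
  set (d := Rmin (Rmin dD 1) (Rabs (p (Q1 0)))).
  assert (Hd : 0 < d) by (apply Rmin_pos; [apply Rmin_pos; lra| apply Jdom_pos; auto]).
  assert (d1 : d <= dD) by (unfold d; eapply Rle_trans; [apply Rmin_l| apply Rmin_l]).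
  assert (d2 : d <= 1) by (unfold d; eapply Rle_trans; [apply Rmin_l| apply Rmin_r]).
  assert (d3 : d <= Rabs (p (Q1 0))) by (unfold d; apply Rmin_r).
  exists N, (S N), d, 1, (fun y => alpha (sfun p y)).
  split; [auto|]. split; [lra|]. split; [|split].
  - intros y y' Hyy. apply Hord. intros c Hc. destruct c as [| |[|j]|k]; simpl; try reflexivity.
    + apply Hyy; lia.
    + rewrite Hyy; [reflexivity|simpl in Hc; lia].
  - intros k. apply Ck_transfer; auto.
  - intros p' Hp' Hnear. split.
    + intros i Hi. destruct i as [|j].
      * simpl. specialize (Hnear Z1 ltac:(simpl; lia)). lra.
      * simpl. apply HD; [|lia]. eapply near_le; [exact d1|exact Hnear].
    + rewrite !(alpha_beta N alpha Hord).
      apply (beta_list N alpha Hord Hsm (Z2 :: Q0 0 :: map Q1 (seq 0 (S N)))).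
      * intros c Hc z Hz. destruct Hc as [<-|[<-|Hc]].
        -- apply (z2_u0_zero N alpha Hord Hsm Hdh z Hz).
        -- apply (z2_u0_zero N alpha Hord Hsm Hdh z Hz).
        -- apply in_map_iff in Hc. destruct Hc as [k [<- Hk]]. apply in_seq in Hk.
           apply (descent N alpha Hord Hsm Hdh k); auto. lia.
      * apply Jdom_Psi; auto.
      * apply Jdom_Psi. apply sfun_Jdom; auto.
      * change (Psi p' (Q1 0)) with (p' (Q1 0)).
        change (Psi (sfun p (args p')) (Q1 0)) with (p (Q1 0)).
        apply sign_close. eapply Rlt_le_trans; [|exact d3]. apply Hnear. simpl; lia.
      * intros c Hc Hnin. destruct c as [| |[|j]|k].
        -- reflexivity.
        -- exfalso; apply Hnin; left; auto.
        -- exfalso; apply Hnin; right; left; auto.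
        -- simpl. rewrite (ev_ext (H j) (sfun p (args p')) p) by auto. rewrite DI_eq. ring.
        -- exfalso; apply Hnin; right; right. apply in_map. apply in_seq. simpl in Hc. lia.
Qed.


Theorem theorem30 :
  forall (N : nat) (alpha : jet -> R),
    order_le cord N alpha ->
    smooth_on coord_eq_dec cord Jdom alpha ->
    ((forall p, Jdom p -> Dh2 N alpha p = 0) <->
     (forall p, Jdom p ->
        exists (r M : nat) (d e : R) (F : (nat -> R) -> R),
          0 < d /\ 0 < e /\
          order_le (fun i : nat => i) (S r) F /\
          smooth_on PeanoNat.Nat.eq_dec (fun i : nat => i)
            (fun x => near_ord (fun i : nat => i) (S r) e (args p) x) F /\
          (forall p', Jdom p' -> near_ord cord M d p p' ->
             near_ord (fun i : nat => i) (S r) e (args p) (args p') /\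
             alpha p' = F (args p')))).
Proof.
  intros N alpha Hord Hsm. split.
  - intros Hdh. apply (dir_fwd N alpha); auto.
  - intros Hrep. apply (dir_back N alpha); auto.
Qed.
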